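(* Let $\mathcal A$ be a perfect algebra over a field $k$ and $S$ a commutative, associative, unital $k$-algebra. If the map $\psi:C(\mathcal A)\otimes S\to C(\mathcal A\otimes S)$, $\gamma\otimes s\mapsto\gamma\otimes L_s$, is an isomorphism, then $$\mathcal D(\mathcal A\otimes S)=\mathcal D(\mathcal A)\overleftarrow{\otimes} S\ \oplus\ C(\mathcal A)\overrightarrow{\otimes}\mathcal D(S).\qquad( * )$$ In particular $( * )$ holds if one of the following is satisfied: (i) $S$ is finite dimensional; (ii) $\mathcal A$ is finitely generated (as an algebra over $k$); (iii) $\mathcal A$ is a pfgc algebra; (iv) $\mathcal A$ is unital. Finally, if one of the following is satisfied: (i) $\mathcal A$ or $S$ is finite dimensional; (ii) $C(\mathcal A)$ is finite dimensional or $S$ is finitely generated over $k$, and one of the following holds: (a) $\mathcal A$ is finitely generated over $k$, (b) $\mathcal A$ is finitely generated as a $C(\mathcal A)$-module and $[\mathcal D(\mathcal A),C(\mathcal A)]=0$, (c) $\mathcal A$ is finitely generated as a $dC(\mathcal A)$-module; then $$\mathcal D(\mathcal A\otimes S)=\mathcal D(\mathcal A)\otimes S\ \oplus\ C(\mathcal A)\otimes\mathcal D(S).$$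
   Context: Algebras are $k$-vector spaces with a bilinear product (not necessarily associative); perfect means $\mathcal A\mathcal A=\mathcal A$. $\mathcal D(\cdot)$ denotes the Lie algebra of derivations. $C(\mathcal A)=\{\gamma\in\operatorname{End}(\mathcal A)\mid\gamma(xy)=\gamma(x)y=x\gamma(y)\}$ is the centroid (commutative when $\mathcal A$ is perfect) and $\mathcal A$ is a $C(\mathcal A)$-module via $\gamma\cdot a=\gamma(a)$; $L_s$ is left multiplication by $s$ on $S$. $\mathcal A$ is pfgc if $\mathcal A\neq0$, perfect, and finitely generated as a $C(\mathcal A)$-module. $dC(\mathcal A)=\{\gamma\in C(\mathcal A)\mid[\gamma,\mathcal D(\mathcal A)]=0\}$. A family $\{f_i\}$ of endomorphisms of a vector space $V$ is summable if for each $v\in V$, $f_i(v)=0$ for all but finitely many $i$ (then $\sum_if_i$ is defined pointwise). For subspaces $E_V\subseteq\operatorname{End}(V)$, $E_W\subseteq\operatorname{End}(W)$: $E_V\overleftarrow{\otimes}E_W$ is the set of operators $\sum_i f_i\otimes g_i$ on $V\otimes W$ with $\{f_i\}\subseteq E_V$ summable on $V$ and $\{g_i\}\subseteq E_W$ arbitrary; given a basis $\{f_i\}$ of $E_V$, $E_V\overrightarrow{\otimes}E_W$ is the set of $\sum_i f_i\otimes g_i$ with $\{g_i\}\subseteq E_W$ summable on $W$. $S$ is identified with a subspace of $\operatorname{End}(S)$ via left multiplication, and all these spaces are regarded inside $\operatorname{End}(\mathcal A\otimes S)$. *)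

(* Defs.v *)
From HB Require Import structures.
From mathcomp Require Import all_boot all_order all_algebra.
Set Implicit Arguments.
Unset Strict Implicit.
Unset Printing Implicit Defensive.
Import GRing.Theory.
Local Open Scope ring_scope.

(* Conventions: a (not necessarily associative) k-algebra is an lmodType k  *)
(* V together with a bilinear product m : V -> V -> V.  Endomorphisms of V  *)
(* are represented as functions V -> V (linearity is stated explicitly);    *)
(* equality of operators is pointwise equality.                             *)

Section Defs.
Variable k : fieldType.

Definition lin (U V : lmodType k) (f : U -> V) : Prop :=
  forall (a : k) (x y : U), f (a *: x + y) = a *: f x + f y.

Definition bilin (U V W : lmodType k) (m : U -> V -> W) : Prop :=
  (forall y, lin (fun x => m x y)) /\ (forall x, lin (m x)).

Definition is_tensor_product (U V W : lmodType k) (tens : U -> V -> W) : Prop :=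
  bilin tens /\
  forall (X : lmodType k) (f : U -> V -> X), bilin f ->
    (exists g : W -> X, lin g /\ forall u v, g (tens u v) = f u v) /\
    (forall g1 g2 : W -> X, lin g1 -> lin g2 ->
       (forall u v, g1 (tens u v) = f u v) ->
       (forall u v, g2 (tens u v) = f u v) -> forall w, g1 w = g2 w).

Definition is_tensor_op (U V W : lmodType k) (tens : U -> V -> W)
  (f : U -> U) (g : V -> V) (h : W -> W) : Prop :=
  lin h /\ forall u v, h (tens u v) = tens (f u) (g v).

Definition is_derivation (V : lmodType k) (m : V -> V -> V) (d : V -> V) : Prop :=
  lin d /\ forall x y, d (m x y) = m (d x) y + m x (d y).

Definition in_centroid (V : lmodType k) (m : V -> V -> V) (g : V -> V) : Prop :=
  lin g /\ forall x y, g (m x y) = m (g x) y /\ g (m x y) = m x (g y).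

Definition in_dcentroid (V : lmodType k) (m : V -> V -> V) (g : V -> V) : Prop :=
  in_centroid m g /\
  forall d, is_derivation m d -> forall x, g (d x) = d (g x).

Definition DC_commute (V : lmodType k) (m : V -> V -> V) : Prop :=
  forall d g, is_derivation m d -> in_centroid m g -> forall x, d (g x) = g (d x).

Definition perfect (V : lmodType k) (m : V -> V -> V) : Prop :=
  forall x : V, exists r : seq (V * V), x = \sum_(p <- r) m p.1 p.2.

Definition unital_alg (V : lmodType k) (m : V -> V -> V) : Prop :=
  exists e : V, forall x, m e x = x /\ m x e = x.

Definition fin_dim (V : lmodType k) : Prop :=
  exists (n : nat) (v : 'I_n -> V),
    forall x : V, exists c : 'I_n -> k, x = \sum_i c i *: v i.

Definition op_space_fin_dim (V : lmodType k) (P : (V -> V) -> Prop) : Prop :=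
  exists (n : nat) (v : 'I_n -> V -> V), (forall i, P (v i)) /\
    forall g, P g -> exists c : 'I_n -> k, forall x, g x = \sum_i c i *: v i x.

Definition alg_fg (V : lmodType k) (m : V -> V -> V) : Prop :=
  exists (n : nat) (v : 'I_n -> V),
    forall P : V -> Prop, P 0 ->
      (forall (a : k) x y, P x -> P y -> P (a *: x + y)) ->
      (forall x y, P x -> P y -> P (m x y)) ->
      (forall i, P (v i)) -> forall x, P x.

Definition comalg_fg (S : comAlgType k) : Prop :=
  exists (n : nat) (v : 'I_n -> S),
    forall P : S -> Prop, P 1 ->
      (forall (a : k) x y, P x -> P y -> P (a *: x + y)) ->
      (forall x y, P x -> P y -> P (x * y)) ->
      (forall i, P (v i)) -> forall x, P x.

Definition module_fg_over (V : lmodType k) (Q : (V -> V) -> Prop) : Prop :=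
  exists (n : nat) (v : 'I_n -> V),
    forall x : V, exists g : 'I_n -> V -> V,
      (forall i, Q (g i)) /\ x = \sum_i g i (v i).

Definition pfgc (V : lmodType k) (m : V -> V -> V) : Prop :=
  (exists x : V, x <> 0) /\ perfect m /\ module_fg_over (in_centroid m).

Definition mulL (S : comAlgType k) (s : S) : S -> S := fun t => s * t.

Definition summable (I : eqType) (V W : lmodType k) (f : I -> V -> W) : Prop :=
  forall v, exists r : seq I, forall i, i \notin r -> f i v = 0.

Definition fam_sum (I : eqType) (V W : lmodType k) (h : I -> V -> W)
  (z : V -> W) : Prop :=
  forall v, exists r : seq I,
    [/\ uniq r, (forall i, i \notin r -> h i v = 0) & z v = \sum_(i <- r) h i v].

Definition centroid_basis (V : lmodType k) (m : V -> V -> V) (J : eqType)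
  (b : J -> V -> V) : Prop :=
  (forall j, in_centroid m (b j)) /\
  (forall (r : seq J) (c : J -> k), uniq r ->
     (forall x, \sum_(j <- r) c j *: b j x = 0) -> forall j, j \in r -> c j = 0) /\
  (forall g, in_centroid m g -> exists (r : seq J) (c : J -> k),
     uniq r /\ forall x, g x = \sum_(j <- r) c j *: b j x).

Section Tensor.
Variables (A : lmodType k) (mulA : A -> A -> A) (S : comAlgType k)
  (T : lmodType k) (tens : A -> S -> T).

(* D(A) <-(x) S *)
Definition left_tens_set (z : T -> T) : Prop :=
  exists (I : eqType) (f : I -> A -> A) (s : I -> S) (h : I -> T -> T),
    [/\ forall i, is_derivation mulA (f i), summable f,
        forall i, is_tensor_op tens (f i) (mulL (s i)) (h i) & fam_sum h z].

(* C(A) ->(x) D(S), relative to the basis b of C(A) *)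
Definition right_tens_set (J : eqType) (b : J -> A -> A) (z : T -> T) : Prop :=
  exists (g : J -> S -> S) (h : J -> T -> T),
    [/\ forall j, is_derivation (@GRing.mul S) (g j), summable g,
        forall j, is_tensor_op tens (b j) (g j) (h j) & fam_sum h z].

(* D(A) (x) S  (finite sums) *)
Definition fin_left_tens_set (z : T -> T) : Prop :=
  exists (n : nat) (f : 'I_n -> A -> A) (s : 'I_n -> S) (h : 'I_n -> T -> T),
    [/\ forall i, is_derivation mulA (f i),
        forall i, is_tensor_op tens (f i) (mulL (s i)) (h i) &
        forall t, z t = \sum_i h i t].

(* C(A) (x) D(S)  (finite sums) *)
Definition fin_right_tens_set (z : T -> T) : Prop :=
  exists (n : nat) (g : 'I_n -> A -> A) (d : 'I_n -> S -> S) (h : 'I_n -> T -> T),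
    [/\ forall i, in_centroid mulA (g i),
        forall i, is_derivation (@GRing.mul S) (d i),
        forall i, is_tensor_op tens (g i) (d i) (h i) &
        forall t, z t = \sum_i h i t].

Definition dsum_decomp (Dset X Y : (T -> T) -> Prop) : Prop :=
  (forall z, Dset z <-> exists x y, [/\ X x, Y y & forall t, z t = x t + y t]) /\
  (forall z, X z -> Y z -> forall t, z t = 0).

Variable mulT : T -> T -> T.

(* the decomposition ( * ) for every basis of C(A) *)
Definition star_decomp : Prop :=
  forall (J : eqType) (b : J -> A -> A), centroid_basis mulA b ->
    dsum_decomp (is_derivation mulT) left_tens_set (right_tens_set b).

(* psi : C(A) (x) S -> C(A (x) S), gamma (x) s |-> gamma (x) L_s, is an   *)
(* isomorphism.  C(A) is given as an abstract vector space CA with a linear *)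
(* isomorphism iota onto C(A), and (U, tensU) is a tensor product of CA, S. *)
Definition psi_iso : Prop :=
  exists (CA : lmodType k) (iota : CA -> A -> A) (U : lmodType k)
         (tensU : CA -> S -> U) (psi : U -> T -> T),
    ((forall (a : k) c c' x, iota (a *: c + c') x = a *: iota c x + iota c' x) /\
     (forall c c', (forall x, iota c x = iota c' x) -> c = c') /\
     (forall c, in_centroid mulA (iota c)) /\
     (forall g, in_centroid mulA g -> exists c, forall x, iota c x = g x)) /\
    is_tensor_product tensU /\
    ((forall (a : k) u u' t, psi (a *: u + u') t = a *: psi u t + psi u' t) /\
     (forall c s, is_tensor_op tens (iota c) (mulL s) (psi (tensU c s))) /\
     (forall u u', (forall t, psi u t = psi u' t) -> u = u') /\
     (forall u, in_centroid mulT (psi u)) /\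
     (forall g, in_centroid mulT g -> exists u, forall t, psi u t = g t)).

End Tensor.
End Defs.

(* Main.v *)
Require Import Defs.
From HB Require Import structures.
From mathcomp Require Import all_boot all_order all_algebra.
From mathcomp Require Import boolp classical_sets functions.
From Stdlib Require Import ClassicalEpsilon.
Set Implicit Arguments. Unset Strict Implicit. Unset Printing Implicit Defensive.
Import GRing.Theory.
Local Open Scope ring_scope.
Section Gen.
Variable k : fieldType.

Lemma sum_cover (I : eqType) (W : nmodType) (F : I -> W) r1 r2 :
  uniq r1 -> uniq r2 -> (forall i, i \notin r1 -> F i = 0) ->
  (forall i, i \notin r2 -> F i = 0) ->
  \sum_(i <- r1) F i = \sum_(i <- r2) F i.
Proof.
move=> u1 u2 h1 h2.
rewrite (bigID (fun i => i \in r2)) /= [X in _ + X]big1 ?addr0; last by move=> i /h2.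
rewrite [RHS](bigID (fun i => i \in r1)) /= [X in _ + X]big1 ?addr0; last by move=> i /h1.
rewrite -[LHS]big_filter -[RHS]big_filter; apply: perm_big.
apply: uniq_perm; rewrite ?filter_uniq // => i.
by rewrite !mem_filter; case: (i \in r1); case: (i \in r2).
Qed.

Definition fsupp (I : eqType) (W : nmodType) (F : I -> W) (r : seq I) :=
  uniq r /\ forall i, i \notin r -> F i = 0.

Definition fsumv (I : eqType) (W : nmodType) (F : I -> W) : W :=
  \sum_(i <- epsilon (inhabits [::]) (fsupp F)) F i.

Lemma fsumvE (I : eqType) (W : nmodType) (F : I -> W) r :
  fsupp F r -> fsumv F = \sum_(i <- r) F i.
Proof.
move=> h; have h0 : fsupp F (epsilon (inhabits [::]) (fsupp F)).
  by apply: epsilon_spec; exists r.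
by rewrite /fsumv; apply: sum_cover; case: h0; case: h.
Qed.

Lemma fsupp_sub (I : eqType) (W : nmodType) (F : I -> W) r r' :
  fsupp F r -> uniq r' -> {subset r <= r'} -> fsupp F r'.
Proof.
move=> [u h] u' s; split => // i ir; apply: h; apply: contra ir; exact: s.
Qed.

Lemma fsupp_union (I : eqType) (W1 W2 : nmodType) (F : I -> W1) (G : I -> W2) r1 r2 :
  fsupp F r1 -> fsupp G r2 ->
  fsupp F (undup (r1 ++ r2)) /\ fsupp G (undup (r1 ++ r2)).
Proof.
move=> h1 h2; split.
  by apply: (fsupp_sub h1); rewrite ?undup_uniq // => i; rewrite mem_undup mem_cat => ->.
by apply: (fsupp_sub h2); rewrite ?undup_uniq // => i; rewrite mem_undup mem_cat orbC => ->.
Qed.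

Lemma fsupp_lin (I : eqType) (W : lmodType k) (F G : I -> W) a r :
  fsupp F r -> fsupp G r -> fsupp (fun i => a *: F i + G i) r.
Proof. by move=> [u h1] [_ h2]; split => // i ir; rewrite h1 // h2 // scaler0 addr0. Qed.

Lemma fsumv_lin (I : eqType) (W : lmodType k) (F G : I -> W) a r1 r2 :
  fsupp F r1 -> fsupp G r2 ->
  fsumv (fun i => a *: F i + G i) = a *: fsumv F + fsumv G.
Proof.
move=> h1 h2; have [h1' h2'] := fsupp_union h1 h2.
rewrite (fsumvE h1') (fsumvE h2') (fsumvE (fsupp_lin a h1' h2')).
by rewrite big_split /= scaler_sumr.
Qed.

Section LinLemmas.
Variables (U V : lmodType k) (h : U -> V).
Hypothesis hl : lin h.
Lemma lin0 : h 0 = 0.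
Proof. have := hl 1 0 0; rewrite !scale1r addr0 => e. by apply: (@addrI _ (h 0)); rewrite addr0 -e. Qed.
Lemma linD x y : h (x + y) = h x + h y.
Proof. by have := hl 1 x y; rewrite !scale1r. Qed.
Lemma linZ a x : h (a *: x) = a *: h x.
Proof. by have := hl a x 0; rewrite !addr0 lin0 addr0. Qed.
Lemma linN x : h (- x) = - h x.
Proof. by rewrite -scaleN1r linZ scaleN1r. Qed.
Lemma linB x y : h (x - y) = h x - h y.
Proof. by rewrite linD linN. Qed.
Lemma lin_sum (I : Type) (r : seq I) (P : pred I) (F : I -> U) :
  h (\sum_(i <- r | P i) F i) = \sum_(i <- r | P i) h (F i).
Proof. by elim/big_rec2: _ => [|i y1 y2 _ <-]; rewrite ?lin0 ?linD. Qed.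
End LinLemmas.

Lemma lin_id (U : lmodType k) : lin (@id U).
Proof. by []. Qed.
Lemma lin_comp (U V W : lmodType k) (f : U -> V) (g : V -> W) :
  lin f -> lin g -> lin (fun x => g (f x)).
Proof. by move=> hf hg a x y; rewrite hf hg. Qed.
Lemma lin_lc (U V : lmodType k) (f g : U -> V) b :
  lin f -> lin g -> lin (fun x => b *: f x + g x).
Proof.
move=> hf hg a x y; rewrite hf hg !scalerDr !scalerA (mulrC a b).
by rewrite addrACA.
Qed.
Lemma lin_sub (U V : lmodType k) (f g : U -> V) :
  lin f -> lin g -> lin (fun x => f x - g x).
Proof.
move=> hf hg; have := lin_lc (-1) hg hf => h a x y.
have e : forall z, f z - g z = -1 *: g z + f z by move=> z; rewrite scaleN1r addrC.
by rewrite !e h.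
Qed.
Lemma lin_zero (U V : lmodType k) : lin (fun _ : U => 0 : V).
Proof. by move=> a x y; rewrite scaler0 addr0. Qed.
Lemma lin_scale (U V : lmodType k) (f : U -> V) b : lin f -> lin (fun x => b *: f x).
Proof. by move=> hf; have := lin_lc b hf (@lin_zero U V) => h a x y; have := h a x y; rewrite !addr0. Qed.
Lemma lin_bigsum (U V : lmodType k) (I : Type) (r : seq I) (F : I -> U -> V) :
  (forall i, lin (F i)) -> lin (fun x => \sum_(i <- r) F i x).
Proof.
move=> hF a x y; elim: r => [|i r IH]; first by rewrite !big_nil scaler0 addr0.
by rewrite !big_cons IH hF scalerDr addrACA.
Qed.
Lemma lin_fsumv (U V : lmodType k) (I : eqType) (F : I -> U -> V) :
  (forall i, lin (F i)) -> (forall x, exists r, fsupp (fun i => F i x) r) ->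
  lin (fun x => fsumv (fun i => F i x)).
Proof.
move=> hF hs a x y; have [r1 h1] := hs x; have [r2 h2] := hs y.
rewrite -(fsumv_lin a h1 h2); congr fsumv; apply: funext => i; exact: hF.
Qed.
End Gen.
Section Tensor.
Variable k : fieldType.
Variables (U V W : lmodType k) (tens : U -> V -> W).
Hypothesis Htp : is_tensor_product tens.

Definition tspan (w : W) : Prop := forall Q : W -> Prop, Q 0 ->
  (forall a x y, Q x -> Q y -> Q (a *: x + y)) -> (forall u v, Q (tens u v)) -> Q w.
Definition tspanb : pred W := fun w => `[< tspan w >].
Lemma tspanb_closed : subsemimod_closed tspanb.
Proof.
apply: GRing.submod_closed_semi; split.
  by rewrite unfold_in; apply/asboolP => Q Q0 QC Qt.
move=> a x y; rewrite !unfold_in => /asboolP hx /asboolP hy.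
apply/asboolP; rewrite /tspan => Q Q0 QC Qt; apply: (QC); [exact: (hx Q Q0 QC Qt)|exact: (hy Q Q0 QC Qt)].
Qed.
HB.instance Definition _ := GRing.isSubmodClosed.Build k W tspanb tspanb_closed.
Record tsub := TSub { tval : W; _ : tval \in tspanb }.
HB.instance Definition _ := [isSub for tval].
HB.instance Definition _ := [Choice of tsub by <:].
HB.instance Definition _ := [SubChoice_isSubLmodule of tsub by <:].

Lemma tval_lc (p q : tsub) a : tval (a *: p + q) = a *: tval p + tval q.
Proof. by []. Qed.

Lemma tens_in u v : tens u v \in tspanb.
Proof. by rewrite unfold_in; apply/asboolP => Q Q0 QC Qt. Qed.
Definition tens' u v : tsub := TSub (tens_in u v).

Lemma tens_lin1 v : lin (fun u => tens u v). Proof. by case: Htp => [[h1 h2] _]. Qed.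
Lemma tens_lin2 u : lin (tens u). Proof. by case: Htp => [[h1 h2] _]. Qed.

Lemma tens_ind (Q : W -> Prop) : Q 0 ->
  (forall a x y, Q x -> Q y -> Q (a *: x + y)) -> (forall u v, Q (tens u v)) ->
  forall w, Q w.
Proof.
move=> Q0 QC Qt w.
have bil : bilin tens'.
  split=> [v|u] a x y; apply: val_inj.
    change (tval (tens' (a *: x + y) v) = tval (a *: tens' x v + tens' y v)).
    rewrite tval_lc /=; exact: tens_lin1.
  change (tval (tens' u (a *: x + y)) = tval (a *: tens' u x + tens' u y)).
  rewrite tval_lc /=; exact: tens_lin2.
case: Htp => bt /(_ tsub tens' bil) [[g [gl gt]] _].
have e : tval (g w) = w.
  apply: ((Htp.2 W tens Htp.1).2 (fun w => tval (g w)) id) => //.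
  - by move=> a x y; rewrite gl tval_lc.
  - by move=> u v; rewrite gt.
have : tval (g w) \in tspanb by case: (g w).
by rewrite e unfold_in => /asboolP; apply.
Qed.

Lemma lin_ext (X : lmodType k) (g1 g2 : W -> X) : lin g1 -> lin g2 ->
  (forall u v, g1 (tens u v) = g2 (tens u v)) -> forall w, g1 w = g2 w.
Proof.
move=> h1 h2 ht; apply: tens_ind => //; first by rewrite !lin0.
by move=> a x y ex ey; rewrite h1 h2 ex ey.
Qed.

Lemma tens_lift (X : lmodType k) (f : U -> V -> X) : bilin f ->
  exists g : W -> X, lin g /\ forall u v, g (tens u v) = f u v.
Proof. by move=> bf; have [[g hg] _] := Htp.2 X f bf; exists g. Qed.

Lemma bilin_tens_comp (f : U -> U) (g : V -> V) : lin f -> lin g ->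
  bilin (fun u v => tens (f u) (g v)).
Proof.
move=> hf hg; split=> [v|u] a x y /=.
  by rewrite hf; apply: tens_lin1.
by rewrite hg; apply: tens_lin2.
Qed.

Definition Top (f : U -> U) (g : V -> V) : W -> W :=
  epsilon (inhabits (fun _ => 0)) (fun h => is_tensor_op tens f g h).

Lemma Top_spec f g : lin f -> lin g -> is_tensor_op tens f g (Top f g).
Proof.
move=> hf hg; apply: epsilon_spec.
have [h [hl ht]] := tens_lift (bilin_tens_comp hf hg); by exists h.
Qed.

Lemma Top_lin f g : lin f -> lin g -> lin (Top f g).
Proof. by move=> hf hg; case: (Top_spec hf hg). Qed.

Lemma Top_tens f g u v : lin f -> lin g -> Top f g (tens u v) = tens (f u) (g v).
Proof. by move=> hf hg; case: (Top_spec hf hg) => _; apply. Qed.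

Lemma Top_uniq f g h : lin f -> lin g -> is_tensor_op tens f g h ->
  forall w, h w = Top f g w.
Proof.
move=> hf hg [hl ht]; apply: lin_ext => //; first exact: Top_lin.
by move=> u v; rewrite ht Top_tens.
Qed.

Lemma bil_ext (X : lmodType k) (M1 M2 : W -> W -> X) : bilin M1 -> bilin M2 ->
  (forall a s b t, M1 (tens a s) (tens b t) = M2 (tens a s) (tens b t)) ->
  forall x y, M1 x y = M2 x y.
Proof.
move=> [h11 h12] [h21 h22] e.
have e1 : forall a s y, M1 (tens a s) y = M2 (tens a s) y.
  by move=> a s; apply: lin_ext => // b t; apply: e.
move=> x y; move: x; apply: lin_ext; [exact: h11|exact: h21|move=> u v; exact: e1].
Qed.

End Tensor.
Section Hamel.
Local Open Scope classical_set_scope.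
Variables (k : fieldType) (V : lmodType k).

Definition indep (Bs : set V) := forall (r : seq V) (c : V -> k), uniq r ->
  (forall v, v \in r -> Bs v) -> \sum_(v <- r) c v *: v = 0 ->
  forall v, v \in r -> c v = 0.

Definition spans (Bs : set V) (x : V) := exists (r : seq V) (c : V -> k),
  [/\ uniq r, (forall v, v \in r -> Bs v) & x = \sum_(v <- r) c v *: v].

Lemma indep_add (Bs : set V) x : indep Bs -> ~ spans Bs x ->
  indep (Bs `|` [set x]).
Proof.
move=> hi hns r c ur rB e.
have remB : forall v, v \in rem x r -> Bs v.
  move=> v; rewrite (mem_rem_uniq _ ur) inE => /andP[vx vr].
  by case: (rB v vr) => // vx'; rewrite vx' eqxx in vx.
have cx : x \in r -> c x = 0.
  move=> xr; case: (eqVneq (c x) 0) => // cx0; exfalso; apply: hns.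
  exists (rem x r), (fun v => - (c x)^-1 * c v); split => //.
    exact: rem_uniq.
  move: e; rewrite (big_rem x xr) /= => /eqP; rewrite addr_eq0 => /eqP e.
  rewrite -[LHS]scale1r -[in LHS](mulVf cx0) -scalerA e scalerN scaler_sumr -sumrN; apply: eq_bigr => v _.
  by rewrite scalerA -scaleNr mulNr.
have hrem : \sum_(v <- rem x r) c v *: v = 0.
  case: (boolP (x \in r)) => xr.
    by move: e; rewrite (big_rem x xr) /= cx // scale0r add0r.
  by rewrite rem_id.
move=> v vr; case: (eqVneq v x) => [ev|vx]; first by rewrite ev; apply: cx; rewrite -ev.
apply: (hi (rem x r)) => //; first exact: rem_uniq.
by rewrite (mem_rem_uniq _ ur) inE vx.
Qed.

Lemma chain_cover (F : set (set V)) (r : seq V) : total_on F subset ->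
  r != [::] -> (forall v, v \in r -> (\bigcup_(X in F) X)%classic v) ->
  exists2 B, F B & forall v, v \in r -> B v.
Proof.
move=> tot; elim: r => // v r IH _ hr.
have [B FB Bv] := hr v (mem_head _ _).
case: (eqVneq r [::]) => [->|rn].
  by exists B => // w; rewrite inE => /eqP ->.
have [B' FB' hB'] := IH rn (fun w wr => hr w (@mem_behead _ (v :: r) w wr)).
case: (tot B B' FB FB') => sub.
  exists B' => // w; rewrite inE => /orP[/eqP ->|wr]; [exact: sub|exact: hB'].
exists B => // w; rewrite inE => /orP[/eqP ->|wr]; [exact: Bv|exact: sub _ (hB' _ wr)].
Qed.

Lemma hamel (P : set V) : exists Bs : set V,
  [/\ Bs `<=` P, indep Bs & forall x, P x -> spans Bs x].
Proof.
pose Fam := fun Bs : set V => Bs `<=` P /\ indep Bs.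
have [|Bs [[BsP iB] maxB]] := @Zorn_bigcup V Fam.
  move=> F FP tot; split.
    by move=> v [B FB Bv]; exact: (FP B FB).1 _ Bv.
  move=> r c ur rU e v vr.
  have rn : r != [::] by case: r vr {ur rU e}.
  have [B FB rB] := chain_cover tot rn rU.
  exact: (FP B FB).2 r c ur rB e v vr.
exists Bs; split => // x Px; apply: contrapT => ns.
have xB : ~ Bs x.
  move=> Bx; apply: ns; exists [:: x], (fun _ => 1); split => //.
    by move=> v; rewrite inE => /eqP ->.
  by rewrite big_seq1 scale1r.
apply: (maxB (Bs `|` [set x])).
  split; first exact: subsetUl.
  by move=> sub; apply: xB; apply: sub; right.
split; last exact: indep_add.
by move=> v [Bv|->]; [exact: BsP|].
Qed.

Section Coef.
Variable Bs : set V.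
Hypothesis iB : indep Bs.
Hypothesis sB : forall x, spans Bs x.

Definition mask (r : seq V) (c : V -> k) v := if v \in r then c v else 0.

Lemma sum_mask r c : \sum_(v <- r) c v *: v = \sum_(v <- r) mask r c v *: v.
Proof. by apply: eq_big_seq => v vr; rewrite /mask vr. Qed.

Lemma rep_uniq r c r' c' : uniq r -> uniq r' ->
  (forall v, v \in r -> Bs v) -> (forall v, v \in r' -> Bs v) ->
  \sum_(v <- r) c v *: v = \sum_(v <- r') c' v *: v ->
  forall v, mask r c v = mask r' c' v.
Proof.
move=> ur ur' rB rB' e.
pose R := undup (r ++ r').
have uR : uniq R by rewrite undup_uniq.
have sR : forall rr cc, {subset rr <= R} -> uniq rr ->
    \sum_(v <- rr) cc v *: v = \sum_(v <- R) mask rr cc v *: v.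
  move=> rr cc sub urr; rewrite sum_mask; apply: sum_cover => // v vn.
    by rewrite /mask (negbTE vn) scale0r.
  rewrite /mask; case: ifP => [vr|]; last by rewrite scale0r.
  by move: vn; rewrite (sub v vr).
have s1 : {subset r <= R} by move=> v vr; rewrite mem_undup mem_cat vr.
have s2 : {subset r' <= R} by move=> v vr; rewrite mem_undup mem_cat vr orbT.
have : \sum_(v <- R) (mask r c v - mask r' c' v) *: v = 0.
  under eq_bigr do rewrite scalerBl.
  by rewrite sumrB -sR // -sR // e subrr.
have RB : forall w, w \in R -> Bs w.
  by move=> w; rewrite mem_undup mem_cat => /orP[/rB|/rB'].
move/(iB uR RB) => h v.
case: (boolP (v \in R)) => vR.
  by apply/eqP; rewrite -subr_eq0; apply/eqP/h.
rewrite /mask; case: ifP => [/s1 vR'|_]; first by rewrite vR' in vR.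
by case: ifP => // /s2 vR'; rewrite vR' in vR.
Qed.

Definition rep_ok x (rc : seq V * (V -> k)) :=
  [/\ uniq rc.1, (forall v, v \in rc.1 -> Bs v) & x = \sum_(v <- rc.1) rc.2 v *: v].

Definition coef (x : V) : V -> k :=
  let rc := epsilon (inhabits ([::], fun _ => 0)) (rep_ok x) in mask rc.1 rc.2.

Lemma coef_rep x : rep_ok x (epsilon (inhabits ([::], fun _ => 0)) (rep_ok x)).
Proof.
apply: epsilon_spec; have [r [c [u rb e]]] := sB x; by exists (r, c).
Qed.

Lemma coef_eq r c x : uniq r -> (forall v, v \in r -> Bs v) ->
  x = \sum_(v <- r) c v *: v -> forall v, coef x v = mask r c v.
Proof.
move=> ur rB e v; rewrite /coef; case: (coef_rep x) => u' rB' e'.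
by apply: rep_uniq => //; rewrite -e -e'.
Qed.

Lemma coefP x : exists r, [/\ uniq r, (forall v, v \in r -> Bs v),
  (forall v, v \notin r -> coef x v = 0) & x = \sum_(v <- r) coef x v *: v].
Proof.
have [r [c [u rB e]]] := sB x; exists r; split => //.
  by move=> v vr; rewrite (coef_eq u rB e) /mask (negbTE vr).
by rewrite {1}e [LHS]sum_mask; apply: eq_big_seq => v _; rewrite (coef_eq u rB e).
Qed.

Lemma coef_out x v : ~ Bs v -> coef x v = 0.
Proof.
move=> nv; have [r [u rB h _]] := coefP x; apply: h; apply/negP => /rB //.
Qed.

Lemma coef_lin v a x y : coef (a *: x + y) v = a * coef x v + coef y v.
Proof.
have [r1 [u1 rB1 z1 e1]] := coefP x; have [r2 [u2 rB2 z2 e2]] := coefP y.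
pose R := undup (r1 ++ r2).
have uR : uniq R by rewrite undup_uniq.
have RB : forall w, w \in R -> Bs w.
  by move=> w; rewrite mem_undup mem_cat => /orP[/rB1|/rB2].
have ex : forall z r, uniq r -> (forall w, w \in r -> Bs w) -> {subset r <= R} ->
    z = \sum_(w <- r) coef z w *: w -> z = \sum_(w <- R) coef z w *: w.
  move=> z r ur rB sub ez; rewrite [LHS]ez; apply: sum_cover => // w wn.
    by rewrite (coef_eq ur rB ez) /mask (negbTE wn) scale0r.
  rewrite (coef_eq ur rB ez) /mask; case: ifP => [wr|]; last by rewrite scale0r.
  by move: wn; rewrite (sub w wr).
have s1 : {subset r1 <= R} by move=> w wr; rewrite mem_undup mem_cat wr.
have s2 : {subset r2 <= R} by move=> w wr; rewrite mem_undup mem_cat wr orbT.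
have ex' := ex x r1 u1 rB1 s1 e1.
have ey' := ex y r2 u2 rB2 s2 e2.
have : a *: x + y = \sum_(w <- R) (a * coef x w + coef y w) *: w.
  rewrite [in LHS]ex' [in LHS]ey' scaler_sumr -big_split /=; apply: eq_bigr => w _.
  by rewrite scalerDl scalerA.
move/(coef_eq uR RB) => ->; rewrite /mask; case: ifP => // vR.
rewrite z1 ?z2 ?mulr0 ?addr0 //; apply/negP => vr; move/negP: vR; apply;
  by rewrite mem_undup mem_cat vr ?orbT.
Qed.

End Coef.
End Hamel.
Section Fin.
Variable k : fieldType.

Lemma steinitz (V : lmodType k) (N : nat) (v : 'I_N -> V) (l : seq V) : uniq l ->
  (forall c : V -> k, \sum_(x <- l) c x *: x = 0 -> forall x, x \in l -> c x = 0) ->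
  (forall x, x \in l -> exists c : 'I_N -> k, x = \sum_q c q *: v q) -> (size l <= N)%N.
Proof.
move=> ul il sl; rewrite leqNgt; apply/negP => lt.
have [cf hcf] : exists cf : V -> 'I_N -> k, forall x, x \in l -> x = \sum_q cf x q *: v q.
  apply: (@choice _ _ (fun x c => x \in l -> x = \sum_q c q *: v q)) => x.
  case: (boolP (x \in l)) => xl; first by have [c e] := sl x xl; exists c.
  by exists (fun _ => 0).
pose m := size l.
pose M : 'M[k]_(m, N) := \matrix_(j, q) cf (nth 0 l j) q.
have kn : kermx M != 0.
  rewrite -mxrank_eq0 mxrank_ker subn_eq0 -ltnNge.
  exact: leq_ltn_trans (rank_leq_col M) lt.
have [y yk yn] := rowV0Pn kn.
have yM : y *m M = 0 by apply/sub_kermxP.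
pose c x := \sum_(j < m | nth 0 l j == x) y 0 j.
have cj : forall j : 'I_m, c (nth 0 l j) = y 0 j.
  move=> j; rewrite /c (bigD1 j) //= big1 ?addr0 // => i /andP[e ne].
  by move: e; rewrite nth_uniq // => /eqP/val_inj ei; rewrite ei eqxx in ne.
have s0 : \sum_(x <- l) c x *: x = 0.
  rewrite (big_nth 0) big_mkord.
  transitivity (\sum_(j < m) y 0 j *: \sum_q cf (nth 0 l j) q *: v q).
    by apply: eq_bigr => j _; rewrite cj -hcf // mem_nth.
  under eq_bigr do rewrite scaler_sumr.
  rewrite exchange_big /=; apply: big1 => q _.
  under eq_bigr do rewrite scalerA.
  rewrite -scaler_suml.
  have e : \sum_(j < m) y 0 j * cf (nth 0 l j) q = 0.
    move: (congr1 (fun B : 'M[k]_(1, N) => B ord0 q) yM) => /=; rewrite !mxE => e0.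
    apply: etrans e0; apply: eq_bigr => j _; by rewrite /M mxE.
  by rewrite e scale0r.
have z := il c s0.
move/negP: yn; apply; apply/eqP/rowP => j; rewrite mxE -cj; apply: z.
exact: mem_nth.
Qed.

Lemma bounded_cover (X : eqType) (P : X -> Prop) (N : nat) :
  (forall l : seq X, uniq l -> (forall x, x \in l -> P x) -> (size l <= N)%N) ->
  exists r : seq X, forall x, P x -> x \in r.
Proof.
move=> H.
pose Q m := `[< exists l, [/\ uniq l, forall x, x \in l -> P x & size l = m] >].
have exQ : exists m, Q m by exists 0; apply/asboolP; exists [::].
have ubQ : forall m, Q m -> (m <= N)%N.
  by move=> m /asboolP [l [ul lP <-]]; apply: H.
case: (ex_maxnP exQ ubQ) => m /asboolP [l [ul lP sl]] maxm.
exists l => x Px; apply: contrapT => /negP xn.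
have : Q (size (x :: l)).
  apply/asboolP; exists (x :: l); split => //=; first by rewrite xn.
  by move=> y; rewrite inE => /orP[/eqP ->|/lP].
by move/maxm; rewrite /= sl ltnn.
Qed.

Lemma gen_supp (I : eqType) (X Y : lmodType k) (F : I -> X -> Y) (n : nat) (v : 'I_n -> X) :
  summable F -> exists r : seq I, forall i, i \notin r -> forall q, F i (v q) = 0.
Proof.
move=> sF; have [f hf] := @choice _ _ (fun q r => forall i, i \notin r -> F i (v q) = 0)
  (fun q => sF (v q)).
exists (flatten (map f (enum 'I_n))) => i iN q; apply: hf; apply: contra iN => ifq.
by apply/flatten_mapP; exists q; rewrite ?mem_enum.
Qed.

Lemma lin_span_zero (X Y : lmodType k) (n : nat) (v : 'I_n -> X) (h : X -> Y) :
  (forall x, exists c : 'I_n -> k, x = \sum_i c i *: v i) -> lin h ->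
  (forall q, h (v q) = 0) -> forall x, h x = 0.
Proof.
move=> sp hl z x; have [c ->] := sp x; rewrite (lin_sum hl) big1 // => i _.
by rewrite (linZ hl) z scaler0.
Qed.

Lemma steinitzF (V : lmodType k) (I : finType) (w : I -> V) (l : seq V) : uniq l ->
  (forall c : V -> k, \sum_(x <- l) c x *: x = 0 -> forall x, x \in l -> c x = 0) ->
  (forall x, x \in l -> exists c : I -> k, x = \sum_i c i *: w i) -> (size l <= #|I|)%N.
Proof.
move=> ul il sl; apply: (steinitz (v := fun q => w (enum_val q))) => // x xl.
have [c ->] := sl x xl; exists (fun q => c (enum_val q)).
rewrite (reindex (fun q : 'I_#|I| => enum_val q)) //=; apply: onW_bij; exact: enum_val_bij.
Qed.

End Fin.
Section Setting.
Variables (k : fieldType) (A : lmodType k) (mulA : A -> A -> A)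
  (S : comAlgType k) (T : lmodType k) (tens : A -> S -> T) (mulT : T -> T -> T).
Hypotheses (HmA : bilin mulA) (Htp : is_tensor_product tens) (HmT : bilin mulT)
  (Hpure : forall (a b : A) (s t : S), mulT (tens a s) (tens b t) = tens (mulA a b) (s * t)).

Lemma mulA_l y : lin (fun x => mulA x y). Proof. exact: HmA.1. Qed.
Lemma mulA_r x : lin (mulA x). Proof. exact: HmA.2. Qed.
Lemma mulT_l y : lin (fun x => mulT x y). Proof. exact: HmT.1. Qed.
Lemma mulT_r x : lin (mulT x). Proof. exact: HmT.2. Qed.

Lemma mulL_lin (s : S) : lin (mulL s).
Proof. by move=> a x y; rewrite /mulL mulrDr scalerAr. Qed.
Lemma lin_idA : lin (@id A). Proof. by []. Qed.

Lemma centroid_lin (V : lmodType k) (m : V -> V -> V) g : in_centroid m g -> lin g.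
Proof. by case. Qed.
Lemma der_lin (V : lmodType k) (m : V -> V -> V) g : is_derivation m g -> lin g.
Proof. by case. Qed.

Lemma der1 (d : S -> S) : is_derivation (@GRing.mul S) d -> d 1 = 0.
Proof.
move=> [dl dm]; have := dm 1 1; rewrite !mul1r mulr1 => e.
by apply: (@addrI _ (d 1)); rewrite -e addr0.
Qed.

Definition Rop (s : S) : T -> T := Top tens id (mulL s).

Lemma Rop_lin s : lin (Rop s). Proof. exact: (Top_lin Htp lin_idA (mulL_lin s)). Qed.
Lemma Rop_tens s a x : Rop s (tens a x) = tens a (s * x).
Proof. exact: (Top_tens Htp _ _ lin_idA (mulL_lin s)). Qed.

Lemma tens_l x : lin (fun a => tens a x). Proof. exact: (tens_lin1 Htp x). Qed.
Lemma tens_r a : lin (tens a). Proof. exact: (tens_lin2 Htp a). Qed.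
Lemma tens0l x : tens 0 x = 0. Proof. exact: (lin0 (tens_l x)). Qed.
Lemma tens0r a : tens a 0 = 0. Proof. exact: (lin0 (tens_r a)). Qed.

Lemma Rop_lc a s s' t : Rop (a *: s + s') t = a *: Rop s t + Rop s' t.
Proof.
move: t; apply: (lin_ext Htp (Rop_lin _)).
  exact: lin_lc (Rop_lin _) (Rop_lin _).
by move=> u v /=; rewrite !Rop_tens mulrDl -scalerAl (tens_r u).
Qed.

Lemma Rop_mul s1 s2 t : Rop (s1 * s2) t = Rop s1 (Rop s2 t).
Proof.
move: t; apply: (lin_ext Htp (Rop_lin _)).
  exact: lin_comp (Rop_lin _) (Rop_lin _).
by move=> u v; rewrite !Rop_tens mulrA.
Qed.

Lemma Rop1 t : Rop 1 t = t.
Proof.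
move: t; apply: (lin_ext Htp (Rop_lin _)) => //.
by move=> u v; rewrite Rop_tens mul1r.
Qed.

Lemma bilin_comp1 (h : T -> T) : lin h -> bilin (fun x y => h (mulT x y)).
Proof.
move=> hl; split=> [y|x] a u v /=.
  by rewrite (mulT_l y) hl.
by rewrite (mulT_r x) hl.
Qed.
Lemma bilin_compl (h : T -> T) : lin h -> bilin (fun x y => mulT (h x) y).
Proof.
move=> hl; split=> [y|x] a u v /=.
  by rewrite hl (mulT_l y).
by rewrite (mulT_r (h x)).
Qed.
Lemma bilin_compr (h : T -> T) : lin h -> bilin (fun x y => mulT x (h y)).
Proof.
move=> hl; split=> [y|x] a u v /=.
  by rewrite (mulT_l (h y)).
by rewrite hl (mulT_r x).
Qed.
Lemma bilin_add (M1 M2 : T -> T -> T) : bilin M1 -> bilin M2 ->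
  bilin (fun x y => M1 x y + M2 x y).
Proof.
move=> [a1 b1] [a2 b2]; split=> [y|x] a u v /=.
  by rewrite a1 a2 scalerDr addrACA.
by rewrite b1 b2 scalerDr addrACA.
Qed.

Lemma Rop_centroid s : in_centroid mulT (Rop s).
Proof.
split; first exact: Rop_lin.
move=> x y; split.
  move: x y; apply: (bil_ext Htp (bilin_comp1 (Rop_lin s)) (bilin_compl (Rop_lin s))).
  by move=> a u b v; rewrite Rop_tens !Hpure Rop_tens mulrA.
move: x y; apply: (bil_ext Htp (bilin_comp1 (Rop_lin s)) (bilin_compr (Rop_lin s))).
by move=> a u b v; rewrite Rop_tens !Hpure Rop_tens mulrA mulrCA mulrA.
Qed.

Lemma comm_centroid (V : lmodType k) (m : V -> V -> V) (d g : V -> V) :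
  bilin m -> is_derivation m d -> in_centroid m g ->
  in_centroid m (fun t => d (g t) - g (d t)).
Proof.
move=> [ml mr] [dl dm] [gl gm]; split; first exact: lin_sub (lin_comp gl dl) (lin_comp dl gl).
move=> x y; have [g1 g2] := gm x y; split.
  have [g3 _] := gm (d x) y; have [g4 _] := gm x (d y).
  have e1 : d (g (m x y)) = m (d (g x)) y + m (g x) (d y) by rewrite g1 dm.
  have e2 : g (d (m x y)) = m (g (d x)) y + m (g x) (d y) by rewrite dm (linD gl) g3 g4.
  by rewrite e1 e2 (linB (ml y)) opprD addrACA subrr addr0.
have [_ g3] := gm (d x) y; have [_ g4] := gm x (d y).
have e1 : d (g (m x y)) = m (d x) (g y) + m x (d (g y)) by rewrite g2 dm.
have e2 : g (d (m x y)) = m (d x) (g y) + m x (g (d y)) by rewrite dm (linD gl) g3 g4.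
by rewrite e1 e2 (linB (mr x)) opprD addrACA subrr add0r.
Qed.

Lemma centroid_comm (V : lmodType k) (m : V -> V -> V) (g h : V -> V) :
  bilin m -> perfect m -> in_centroid m g -> in_centroid m h ->
  forall x, g (h x) = h (g x).
Proof.
move=> [ml mr] pm [gl gm] [hl hm] x; have [r ->] := pm x.
rewrite (lin_sum hl) (lin_sum gl) [in RHS](lin_sum gl) (lin_sum hl); apply: eq_bigr => p _.
have [h1 _] := hm p.1 p.2; have [_ g2] := gm p.1 p.2.
have [_ g3] := gm (h p.1) p.2; have [h4 _] := hm p.1 (g p.2).
by rewrite h1 g3 g2 h4.
Qed.
Lemma cover_sub (I : eqType) (X : nmodType) (F : I -> X) (Rx R : seq I) :
  {subset Rx <= R} -> (forall i, i \notin Rx -> F i = 0) -> forall i, i \notin R -> F i = 0.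
Proof. move=> sub z i iR; apply: z; apply/negP => /sub; by rewrite (negbTE iR). Qed.

Lemma undup3 (I : eqType) (r1 r2 r3 : seq I) :
  let R := undup (r1 ++ r2 ++ r3) in
  [/\ uniq R, {subset r1 <= R}, {subset r2 <= R} & {subset r3 <= R}].
Proof.
split; rewrite ?undup_uniq // => i ir; rewrite mem_undup !mem_cat ir ?orbT //.
Qed.

Lemma fsupp_ext (I : eqType) (W : nmodType) (F G : I -> W) r :
  (forall i, F i = G i) -> fsupp F r -> fsupp G r.
Proof. by move=> e [u h]; split => // i ir; rewrite -e h. Qed.

Lemma fsupp_undup (I : eqType) (W : nmodType) (F : I -> W) r :
  (forall i, i \notin r -> F i = 0) -> fsupp F (undup r).
Proof. by move=> h; split; rewrite ?undup_uniq // => i; rewrite mem_undup; apply: h. Qed.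


Definition gright (z : T -> T) : Prop :=
  exists (I : eqType) (gam : I -> A -> A) (d : I -> S -> S) (h : I -> T -> T),
    [/\ forall i, in_centroid mulA (gam i), forall i, is_derivation (@GRing.mul S) (d i),
        summable d, forall i, is_tensor_op tens (gam i) (d i) (h i) & fam_sum h z].

Lemma famP (I : eqType) (h : I -> T -> T) z : fam_sum h z ->
  (forall v, exists r, fsupp (fun i => h i v) r) /\ (forall v, z v = fsumv (fun i => h i v)).
Proof.
move=> hf; split=> v; have [r [u z0 e]] := hf v.
  by exists r.
by rewrite e (@fsumvE _ _ _ r).
Qed.

Lemma fam_lin (I : eqType) (h : I -> T -> T) z : (forall i, lin (h i)) -> fam_sum h z -> lin z.
Proof.
move=> hl hf; have [hs he] := famP hf.
move=> a x y; rewrite !he; exact: (lin_fsumv hl hs).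
Qed.

Lemma summ_uniq (I : eqType) (X W : lmodType k) (f : I -> X -> W) x :
  summable f -> exists r, fsupp (fun i => f i x) r.
Proof. by move=> sf; have [r h] := sf x; exists (undup r); apply: fsupp_undup. Qed.

Lemma fam_tens (I : eqType) (f : I -> A -> A) (d : I -> S -> S) (h : I -> T -> T) z a y R :
  (forall i, is_tensor_op tens (f i) (d i) (h i)) -> fam_sum h z ->
  uniq R -> (forall i, i \notin R -> f i a = 0) ->
  z (tens a y) = \sum_(i <- R) tens (f i a) (d i y).
Proof.
move=> ho hf uR z0; have [hs he] := famP hf.
rewrite he (@fsumvE _ _ _ R).
  by apply: eq_bigr => i _; case: (ho i) => _ ->.
by split => // i iR; case: (ho i) => _ ->; rewrite z0 // tens0l.
Qed.

Lemma fam_tens' (I : eqType) (f : I -> A -> A) (d : I -> S -> S) (h : I -> T -> T) z a y R :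
  (forall i, is_tensor_op tens (f i) (d i) (h i)) -> fam_sum h z ->
  uniq R -> (forall i, i \notin R -> d i y = 0) ->
  z (tens a y) = \sum_(i <- R) tens (f i a) (d i y).
Proof.
move=> ho hf uR z0; have [hs he] := famP hf.
rewrite he (@fsumvE _ _ _ R).
  by apply: eq_bigr => i _; case: (ho i) => _ ->.
by split => // i iR; case: (ho i) => _ ->; rewrite z0 // tens0r.
Qed.

Lemma left_props z : left_tens_set mulA tens z ->
  [/\ lin z, forall s t, z (Rop s t) = Rop s (z t) & is_derivation mulT z].
Proof.
move=> [I [f [s [h [fd fs ho hf]]]]].
have hl : forall i, lin (h i) by move=> i; case: (ho i).
have zl := fam_lin hl hf.
split => //.
- move=> s0 t; move: t; apply: (lin_ext Htp).
  + exact: lin_comp (Rop_lin s0) zl.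
  + exact: lin_comp zl (Rop_lin s0).
  move=> a y; have [R [uR zR]] := summ_uniq a fs.
  rewrite Rop_tens !(fam_tens _ ho hf uR zR) (lin_sum (Rop_lin s0)).
  by apply: eq_bigr => i _; rewrite Rop_tens /mulL mulrCA.
split => //.
apply: (bil_ext Htp (bilin_comp1 zl) (bilin_add (bilin_compl zl) (bilin_compr zl))).
move=> a u c t.
have [R1 [u1 z1]] := summ_uniq (mulA a c) fs; have [R2 [u2 z2]] := summ_uniq a fs.
have [R3 [u3 z3]] := summ_uniq c fs.
have [uR s1 s2 s3] := undup3 R1 R2 R3; set R := undup _ in uR s1 s2 s3.
rewrite Hpure !(fam_tens _ ho hf uR (cover_sub s1 z1)) (fam_tens _ ho hf uR (cover_sub s2 z2)).
rewrite (fam_tens _ ho hf uR (cover_sub s3 z3)) (lin_sum (mulT_l _)) (lin_sum (mulT_r _)) -big_split /=.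
apply: eq_bigr => i _; rewrite !Hpure; have [_ dm] := fd i; rewrite dm (linD (tens_l _)).
by rewrite /mulL mulrA [u * (s i * t)]mulrCA mulrA.
Qed.

Lemma gright_props z : gright z -> [/\ lin z, forall a, z (tens a 1) = 0 & is_derivation mulT z].
Proof.
move=> [I [gam [d [h [gc dd ds ho hf]]]]].
have hl : forall i, lin (h i) by move=> i; case: (ho i).
have zl := fam_lin hl hf.
split => //.
  move=> a; have [R [uR zR]] := summ_uniq (1 : S) ds.
  by rewrite (fam_tens' _ ho hf uR zR) big1 // => i _; rewrite der1 // tens0r.
split => //.
apply: (bil_ext Htp (bilin_comp1 zl) (bilin_add (bilin_compl zl) (bilin_compr zl))).
move=> a u c t.
have [R1 [u1 z1]] := summ_uniq (u * t) ds; have [R2 [u2 z2]] := summ_uniq u ds.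
have [R3 [u3 z3]] := summ_uniq t ds.
have [uR s1 s2 s3] := undup3 R1 R2 R3; set R := undup _ in uR s1 s2 s3.
rewrite Hpure !(fam_tens' _ ho hf uR (cover_sub s1 z1)) (fam_tens' _ ho hf uR (cover_sub s2 z2)).
rewrite (fam_tens' _ ho hf uR (cover_sub s3 z3)) (lin_sum (mulT_l _)) (lin_sum (mulT_r _)) -big_split /=.
apply: eq_bigr => i _; rewrite !Hpure; have [_ dm] := dd i; rewrite dm (linD (tens_r _)).
have [_ gm] := gc i; have [e1 e2] := gm a c.
by rewrite {1}e1 e2.
Qed.

Lemma dir_zero z : lin z -> (forall s t, z (Rop s t) = Rop s (z t)) ->
  (forall a, z (tens a 1) = 0) -> forall t, z t = 0.
Proof.
move=> zl zc z1; apply: (lin_ext Htp zl (@lin_zero k T T)) => a y.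
have -> : tens a y = Rop y (tens a 1) by rewrite Rop_tens mulr1.
by rewrite zc z1 (lin0 (Rop_lin y)).
Qed.

Lemma der_add (x y : T -> T) : is_derivation mulT x -> is_derivation mulT y ->
  forall z, (forall t, z t = x t + y t) -> is_derivation mulT z.
Proof.
move=> [xl xm] [yl ym] z e; split.
  by move=> a u v; rewrite !e xl yl scalerDr addrACA.
move=> u v; rewrite !e xm ym (linD (mulT_l _)) (linD (mulT_r _)).
by rewrite addrACA.
Qed.

Lemma decomp_gen (X Y : (T -> T) -> Prop) :
  (forall z, X z -> left_tens_set mulA tens z) -> (forall z, Y z -> gright z) ->
  (forall D, is_derivation mulT D -> exists x y, [/\ X x, Y y & forall t, D t = x t + y t]) ->
  dsum_decomp (is_derivation mulT) X Y.
Proof.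
move=> XL YR H; split.
  move=> z; split; first exact: H.
  move=> [x [y [Xx Yy e]]]; have [_ _ dx] := left_props (XL _ Xx).
  have [_ _ dy] := gright_props (YR _ Yy); exact: der_add dx dy z e.
move=> z Xz Yz; have [zl zc _] := left_props (XL _ Xz); have [_ z1 _] := gright_props (YR _ Yz).
exact: dir_zero.
Qed.

Lemma fin_left_left z : fin_left_tens_set mulA tens z -> left_tens_set mulA tens z.
Proof.
move=> [n [f [s [h [fd ho he]]]]]; exists ('I_n : eqType), f, s, h; split => //.
  by move=> v; exists (index_enum 'I_n) => i; rewrite mem_index_enum.
move=> v; exists (index_enum 'I_n); split.
- exact: index_enum_uniq.
- by move=> i; rewrite mem_index_enum.
- exact: he.
Qed.

Lemma fin_right_gright z : fin_right_tens_set mulA tens z -> gright z.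
Proof.
move=> [n [g [d [h [gc dd ho he]]]]]; exists ('I_n : eqType), g, d, h; split => //.
  by move=> v; exists (index_enum 'I_n) => i; rewrite mem_index_enum.
move=> v; exists (index_enum 'I_n); split.
- exact: index_enum_uniq.
- by move=> i; rewrite mem_index_enum.
- exact: he.
Qed.

Lemma right_gright (J : eqType) (b : J -> A -> A) z : centroid_basis mulA b ->
  right_tens_set tens b z -> gright z.
Proof.
move=> [bc _] [g [h [gd gs ho hf]]]; exists J, b, g, h; split => //.
Qed.

Lemma T_perfect : perfect mulA -> perfect mulT.
Proof.
move=> pA; apply: (tens_ind Htp).
- by exists [::]; rewrite big_nil.
- move=> a x y [r1 e1] [r2 e2].
  exists (map (fun p => (a *: p.1, p.2)) r1 ++ r2).
  rewrite big_cat big_map /= e1 e2 scaler_sumr; congr (_ + _); apply: eq_bigr => p _.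
  by rewrite (linZ (mulT_l _)).
- move=> a x; have [r ->] := pA a.
  exists (map (fun p => (tens p.1 x, tens p.2 1)) r).
  rewrite big_map (lin_sum (tens_l x)); apply: eq_bigr => p _.
  by rewrite Hpure mulr1.
Qed.

Section Basis.
Variables (BS : set S).
Hypotheses (iBS : indep BS) (sBS : forall x, spans BS x).

Definition cS (x e : S) : k := coef BS x e.

Lemma cS_lin e a x y : cS (a *: x + y) e = a * cS x e + cS y e.
Proof. exact: coef_lin. Qed.

Lemma pT_bilin e : bilin (fun (a : A) (x : S) => cS x e *: a).
Proof.
split=> [x|a] b u v /=.
  by rewrite scalerDr !scalerA mulrC.
by rewrite cS_lin scalerDl scalerA.
Qed.

Definition pT_ok (e : S) (h : T -> A) := lin h /\ forall a x, h (tens a x) = cS x e *: a.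
Definition pT (e : S) : T -> A := epsilon (inhabits (fun _ => 0)) (pT_ok e).

Lemma pT_spec e : pT_ok e (pT e).
Proof.
rewrite /pT; apply: epsilon_spec; have [h [hl ht]] := tens_lift Htp (pT_bilin e); by exists h.
Qed.
Lemma pT_lin e : lin (pT e). Proof. by case: (pT_spec e). Qed.
Lemma pT_tens e a x : pT e (tens a x) = cS x e *: a. Proof. by case: (pT_spec e). Qed.

Lemma cS_out x e : ~ BS e -> cS x e = 0.
Proof. exact: coef_out. Qed.

Lemma cS_rep x : exists r, [/\ uniq r, (forall v, v \in r -> BS v),
  (forall v, v \notin r -> cS x v = 0) & x = \sum_(v <- r) cS x v *: v].
Proof. exact: coefP. Qed.

Lemma T_supp t : exists r, fsupp (fun e => pT e t) r.
Proof.
move: t; apply: (tens_ind Htp).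
- by exists [::]; split => // i _; rewrite (lin0 (pT_lin i)).
- move=> a x y [r1 h1] [r2 h2]; have [h1' h2'] := fsupp_union h1 h2.
  exists (undup (r1 ++ r2)); apply: fsupp_ext (fsupp_lin a h1' h2').
  by move=> i; rewrite (pT_lin i).
- move=> a x; have [r [u _ z _]] := cS_rep x; exists r; split => // e er.
  by rewrite pT_tens z // scale0r.
Qed.

Definition tsupp t := epsilon (inhabits [::]) (fsupp (fun e => pT e t)).
Lemma tsupp_spec t : fsupp (fun e => pT e t) (tsupp t).
Proof. by rewrite /tsupp; apply: epsilon_spec; apply: T_supp. Qed.

Lemma T_recon0 t : exists r, fsupp (fun e => pT e t) r /\ t = \sum_(e <- r) tens (pT e t) e.
Proof.
move: t; apply: (tens_ind Htp).
- by exists [::]; rewrite big_nil; split => //; split => // i _; rewrite (lin0 (pT_lin i)).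
- move=> a x y [r1 [h1 e1]] [r2 [h2 e2]]; have [h1' h2'] := fsupp_union h1 h2.
  exists (undup (r1 ++ r2)); split.
    by apply: fsupp_ext (fsupp_lin a h1' h2') => i; rewrite (pT_lin i).
  have ex : forall z r, fsupp (fun e => pT e z) r -> fsupp (fun e => pT e z) (undup (r1 ++ r2)) ->
      \sum_(e <- r) tens (pT e z) e = \sum_(e <- undup (r1 ++ r2)) tens (pT e z) e.
    move=> z r [u1 z1] [u2 z2]; apply: sum_cover => // e en.
      by rewrite z1 // tens0l.
    by rewrite z2 // tens0l.
  rewrite {1}e1 {1}e2 (ex x r1 h1 h1') (ex y r2 h2 h2') scaler_sumr -big_split /=.
  apply: eq_bigr => e _; rewrite (pT_lin e).
  by rewrite (tens_l e).
- move=> a x; have [r [u _ z ex]] := cS_rep x; exists r; split.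
    by split => // e er; rewrite pT_tens z // scale0r.
  rewrite {1}ex (lin_sum (tens_r a)); apply: eq_bigr => e _.
  by rewrite (linZ (tens_r a)) pT_tens (linZ (tens_l e)).
Qed.

Lemma T_recon t r : fsupp (fun e => pT e t) r -> t = \sum_(e <- r) tens (pT e t) e.
Proof.
move=> [u z]; have [r0 [[u0 z0] e0]] := T_recon0 t; rewrite {1}e0.
apply: sum_cover => // e en; [by rewrite z0 // tens0l|by rewrite z // tens0l].
Qed.

Lemma pT_out e t : ~ BS e -> pT e t = 0.
Proof.
move=> ne; move: t; apply: (lin_ext Htp (pT_lin e) (@lin_zero k T A)).
by move=> a x; rewrite pT_tens cS_out // scale0r.
Qed.

Lemma pT_mulr e t b : pT e (mulT t (tens b 1)) = mulA (pT e t) b.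
Proof.
move: t; apply: (lin_ext Htp).
- exact: lin_comp (mulT_l _) (pT_lin e).
- exact: lin_comp (pT_lin e) (mulA_l b).
by move=> a x; rewrite Hpure !pT_tens mulr1 (linZ (mulA_l b)).
Qed.

Lemma pT_mull e a t : pT e (mulT (tens a 1) t) = mulA a (pT e t).
Proof.
move: t; apply: (lin_ext Htp).
- exact: lin_comp (mulT_r _) (pT_lin e).
- exact: lin_comp (pT_lin e) (mulA_r a).
by move=> b x; rewrite Hpure !pT_tens mul1r (linZ (mulA_r a)).
Qed.

Section SDecomp.
Variable Phi : T -> T.
Hypothesis Phil : lin Phi.
Hypothesis PhiR : forall s t, Phi (Rop s t) = Rop s (Phi t).

Definition fP e (a : A) : A := pT e (Phi (tens a 1)).
Lemma fP_lin e : lin (fP e).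
Proof. exact: lin_comp (lin_comp (tens_l 1) Phil) (pT_lin e). Qed.
Definition hP e : T -> T := Top tens (fP e) (mulL e).
Lemma hP_lin e : lin (hP e). Proof. rewrite /hP; exact: (Top_lin Htp (fP_lin e) (mulL_lin e)). Qed.
Lemma hP_tens e a x : hP e (tens a x) = tens (fP e a) (e * x).
Proof. rewrite /hP; exact: (Top_tens Htp _ _ (fP_lin e) (mulL_lin e)). Qed.

Lemma fP_supp a : fsupp (fun e => fP e a) (tsupp (Phi (tens a 1))).
Proof. exact: tsupp_spec. Qed.

Lemma Phi_tens a x r : fsupp (fun e => fP e a) r ->
  Phi (tens a x) = \sum_(e <- r) tens (fP e a) (x * e).
Proof.
move=> hr; have -> : tens a x = Rop x (tens a 1) by rewrite Rop_tens mulr1.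
rewrite PhiR (T_recon hr) (lin_sum (Rop_lin x)); apply: eq_bigr => e _.
by rewrite Rop_tens.
Qed.

Lemma hP_supp t : exists r, fsupp (fun e => hP e t) r.
Proof.
move: t; apply: (tens_ind Htp).
- by exists [::]; split => // i _; rewrite (lin0 (hP_lin i)).
- move=> a x y [r1 h1] [r2 h2]; have [h1' h2'] := fsupp_union h1 h2.
  exists (undup (r1 ++ r2)); apply: fsupp_ext (fsupp_lin a h1' h2').
  by move=> i; rewrite (hP_lin i).
- move=> a x; have [u z] := fP_supp a; exists (tsupp (Phi (tens a 1))); split => // e er.
  by rewrite hP_tens; have := z e er; rewrite /fP => ->; rewrite tens0l.
Qed.

Lemma Phi_decomp t : Phi t = fsumv (fun e => hP e t).
Proof.
move: t; apply: (lin_ext Htp Phil).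
  by apply: lin_fsumv; [exact: hP_lin|exact: hP_supp].
move=> a x; have hr := fP_supp a.
rewrite (Phi_tens x hr) (@fsumvE _ _ _ (tsupp (Phi (tens a 1)))).
  by apply: eq_bigr => e _; rewrite hP_tens mulrC.
case: hr => u z; split => // e er; rewrite hP_tens.
by have := z e er; rewrite /fP => ->; rewrite tens0l.
Qed.

Lemma Phi_decomp_fin r : uniq r -> (forall e, e \notin r -> forall a, fP e a = 0) ->
  forall t, Phi t = \sum_(e <- r) hP e t.
Proof.
move=> u z t; rewrite Phi_decomp; apply: fsumvE; split => // e er.
move: t; apply: (lin_ext Htp (hP_lin e) (@lin_zero k T T)).
by move=> a x; rewrite hP_tens z // tens0l.
Qed.

End SDecomp.


Definition msk (I : eqType) (X : nmodType) (r : seq I) (f : I -> X) i :=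
  if i \in r then f i else 0.

Definition CTfinP := forall G, in_centroid mulT G -> exists l : seq ((A -> A) * S),
  (forall p, List.In p l -> in_centroid mulA p.1) /\
  forall t, G t = \sum_(p <- l) Top tens p.1 (mulL p.2) t.

Section Core.
Variables (J : eqType) (b : J -> A -> A) (valid : J -> Prop).
Hypothesis bval : forall j, valid j -> in_centroid mulA (b j).
Hypothesis bind : forall (r : seq J) (c : J -> k), uniq r -> (forall j, j \in r -> valid j) ->
  (forall x, \sum_(j <- r) c j *: b j x = 0) -> forall j, j \in r -> c j = 0.
Hypothesis bspan : forall g, in_centroid mulA g -> exists r (c : J -> k),
  [/\ uniq r, (forall j, j \in r -> valid j) & forall x, g x = \sum_(j <- r) c j *: b j x].
Hypothesis CTfin : CTfinP.

Definition bb j (a : A) : A := if `[< valid j >] then b j a else 0.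
Lemma bb_valid j : valid j -> forall a, bb j a = b j a.
Proof. by move=> v a; rewrite /bb; case: asboolP. Qed.
Lemma bb_inval j : ~ valid j -> forall a, bb j a = 0.
Proof. by move=> v a; rewrite /bb; case: asboolP. Qed.
Lemma bb_cent j : in_centroid mulA (bb j).
Proof.
case: (pselect (valid j)) => v.
  have [bl bm] := bval v; split.
    by move=> a x y; rewrite !bb_valid // bl.
  by move=> x y; rewrite !bb_valid //; apply: bm.
split; first by move=> a x y; rewrite !bb_inval // scaler0 addr0.
by move=> x y; rewrite !bb_inval // (lin0 (mulA_l y)) (lin0 (mulA_r x)).
Qed.
Lemma bb_lin j : lin (bb j). Proof. by case: (bb_cent j). Qed.

Definition Hs j (s : S) : T -> T := Top tens (bb j) (mulL s).
Lemma Hs_lin j s : lin (Hs j s).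
Proof. rewrite /Hs; exact: (Top_lin Htp (bb_lin j) (mulL_lin s)). Qed.
Lemma Hs_tens j s a x : Hs j s (tens a x) = tens (bb j a) (s * x).
Proof. rewrite /Hs; exact: (Top_tens Htp _ _ (bb_lin j) (mulL_lin s)). Qed.
Lemma Hs_lc j c s s' t : Hs j (c *: s + s') t = c *: Hs j s t + Hs j s' t.
Proof.
move: t; apply: (lin_ext Htp (Hs_lin j _)); first exact: lin_lc (Hs_lin j _) (Hs_lin j _).
by move=> u v; rewrite !Hs_tens mulrDl -scalerAl (tens_r _).
Qed.
Lemma Hs0 j t : Hs j 0 t = 0.
Proof.
move: t; apply: (lin_ext Htp (Hs_lin j _) (@lin_zero k T T)).
by move=> u v; rewrite Hs_tens mul0r tens0r.
Qed.
Lemma HsD j s s' t : Hs j (s + s') t = Hs j s t + Hs j s' t.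
Proof. by have := Hs_lc j 1 s s' t; rewrite !scale1r. Qed.
Lemma HsB j s s' t : Hs j (s - s') t = Hs j s t - Hs j s' t.
Proof.
have := Hs_lc j (-1) s' s t; rewrite !scaleN1r => e.
by rewrite addrC e addrC.
Qed.
Lemma Hs_Rop j s y t : Hs j s (Rop y t) = Hs j (s * y) t.
Proof.
move: t; apply: (lin_ext Htp); first exact: lin_comp (Rop_lin y) (Hs_lin j s).
  exact: Hs_lin.
by move=> u v; rewrite Rop_tens !Hs_tens mulrA.
Qed.
Lemma Rop_Hs j s y t : Rop y (Hs j s t) = Hs j (y * s) t.
Proof.
move: t; apply: (lin_ext Htp); first exact: lin_comp (Hs_lin j s) (Rop_lin y).
  exact: Hs_lin.
by move=> u v; rewrite !Hs_tens Rop_tens mulrA.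
Qed.

Lemma sum_Hs_msk r R (sig : J -> S) t : uniq r -> uniq R -> {subset r <= R} ->
  \sum_(j <- r) Hs j (sig j) t = \sum_(j <- R) Hs j (msk r sig j) t.
Proof.
move=> ur uR sub; rewrite (eq_big_seq (fun j => Hs j (msk r sig j) t)); last first.
  by move=> j jr; rewrite /msk jr.
apply: sum_cover => // j jn; first by rewrite /msk (negbTE jn) Hs0.
rewrite /msk; case: ifP => [jr|]; last by rewrite Hs0.
by move: jn; rewrite (sub j jr).
Qed.

Lemma F2 r (sig : J -> S) : uniq r -> (forall j, j \in r -> valid j) ->
  (forall t, \sum_(j <- r) Hs j (sig j) t = 0) -> forall j, j \in r -> sig j = 0.
Proof.
move=> ur rv h.
have c0 : forall e j, j \in r -> cS (sig j) e = 0.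
  move=> e; apply: (bind (c := fun j => cS (sig j) e)) => // a.
  have e1 : \sum_(j <- r) pT e (Hs j (sig j) (tens a 1)) = 0.
    by rewrite -(lin_sum (pT_lin e)) h (lin0 (pT_lin e)).
  transitivity (\sum_(j <- r) pT e (Hs j (sig j) (tens a 1))); last exact: e1.
  apply: eq_big_seq => j jr; rewrite Hs_tens mulr1 pT_tens bb_valid //; exact: rv.
move=> j jr; have [r' [_ _ _ ->]] := cS_rep (sig j).
by rewrite big1 // => e _; rewrite c0 // scale0r.
Qed.

Lemma F1 G : in_centroid mulT G -> exists r (sig : J -> S),
  [/\ uniq r, (forall j, j \in r -> valid j) & forall t, G t = \sum_(j <- r) Hs j (sig j) t].
Proof.
move=> /CTfin [l [lc le]].
suff [r [sig [ur rv e]]] : exists r (sig : J -> S), [/\ uniq r, (forall j, j \in r -> valid j) &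
    forall t, \sum_(p <- l) Top tens p.1 (mulL p.2) t = \sum_(j <- r) Hs j (sig j) t].
  by exists r, sig; split => // t; rewrite le e.
elim: l lc {le} => [|p l IH] lc.
  by exists [::], (fun _ => 0); split => // t; rewrite !big_nil.
have [r1 [s1 [u1 v1 e1]]] := IH (fun q ql => lc q (List.in_cons _ _ _ ql)).
have pc := lc p (List.in_eq _ _).
have [r2 [c [u2 v2 e2]]] := bspan pc.
pose R := undup (r1 ++ r2).
have uR : uniq R by rewrite undup_uniq.
have s1R : {subset r1 <= R} by move=> j jr; rewrite mem_undup mem_cat jr.
have s2R : {subset r2 <= R} by move=> j jr; rewrite mem_undup mem_cat jr orbT.
exists R, (fun j => msk r2 (fun j => c j *: p.2) j + msk r1 s1 j); split => //.
  by move=> j; rewrite mem_undup mem_cat => /orP[/v1|/v2].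
move=> t; rewrite big_cons e1 (sum_Hs_msk _ _ u1 uR s1R).
have -> : Top tens p.1 (mulL p.2) t = \sum_(j <- r2) Hs j (c j *: p.2) t.
  move: t; apply: (lin_ext Htp).
  - exact: (Top_lin Htp (centroid_lin pc) (mulL_lin _)).
  - by apply: lin_bigsum => j; exact: Hs_lin.
  move=> a x; rewrite (Top_tens Htp _ _ (centroid_lin pc) (mulL_lin _)) e2.
  rewrite (lin_sum (tens_l _)); apply: eq_big_seq => j jr.
  rewrite Hs_tens bb_valid; last exact: v2.
  by rewrite /mulL -scalerAl (linZ (tens_l _)) (linZ (tens_r _)).
rewrite (sum_Hs_msk _ _ u2 uR s2R) -big_split /=; apply: eq_bigr => j _.
by rewrite HsD.
Qed.

Section Der.
Variable D : T -> T.
Hypothesis HD : is_derivation mulT D.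
Lemma D_lin : lin D. Proof. by case: HD. Qed.

Definition Gam (s : S) (t : T) := D (Rop s t) - Rop s (D t).
Lemma Gam_cent s : in_centroid mulT (Gam s).
Proof. exact: comm_centroid HmT HD (Rop_centroid s). Qed.
Lemma Gam_lin s : lin (Gam s). Proof. by case: (Gam_cent s). Qed.
Lemma Gam_lc c s s' t : Gam (c *: s + s') t = c *: Gam s t + Gam s' t.
Proof.
rewrite /Gam !Rop_lc (linD D_lin) (linZ D_lin) scalerBr.
by rewrite opprD addrACA.
Qed.
Lemma Gam_mul s1 s2 t : Gam (s1 * s2) t = Gam s1 (Rop s2 t) + Rop s1 (Gam s2 t).
Proof.
rewrite /Gam !Rop_mul (linB (Rop_lin s1)).
by rewrite addrA subrK.
Qed.

Definition Grep_ok s (rs : seq J * (J -> S)) :=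
  [/\ uniq rs.1, (forall j, j \in rs.1 -> valid j) &
      forall t, Gam s t = \sum_(j <- rs.1) Hs j (rs.2 j) t].
Definition Grep s := epsilon (inhabits ([::], fun _ => 0)) (Grep_ok s).
Lemma Grep_spec s : Grep_ok s (Grep s).
Proof.
rewrite /Grep; apply: epsilon_spec.
have [r [sig h]] := F1 (Gam_cent s); by exists (r, sig).
Qed.
Definition rl s := (Grep s).1.
Definition g j s := msk (Grep s).1 (Grep s).2 j.
Lemma rl_uniq s : uniq (rl s). Proof. by case: (Grep_spec s). Qed.
Lemma rl_valid s j : j \in rl s -> valid j. Proof. by case: (Grep_spec s) => _ h _; apply: h. Qed.
Lemma g_out j s : j \notin rl s -> g j s = 0.
Proof. by move=> jn; rewrite /g /msk (negbTE jn). Qed.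
Lemma g_inval j s : ~ valid j -> g j s = 0.
Proof. by move=> nv; apply: g_out; apply/negP => /rl_valid. Qed.

Lemma Gam_g s R t : uniq R -> {subset rl s <= R} -> Gam s t = \sum_(j <- R) Hs j (g j s) t.
Proof.
move=> uR sub; case: (Grep_spec s) => u v ->.
exact: sum_Hs_msk.
Qed.

Lemma g_char s R (tau : J -> S) : uniq R -> (forall j, j \in R -> valid j) ->
  (forall j, j \notin R -> tau j = 0) ->
  (forall t, Gam s t = \sum_(j <- R) Hs j (tau j) t) -> forall j, g j s = tau j.
Proof.
move=> uR Rv z e.
pose R' := undup (R ++ rl s).
have uR' : uniq R' by rewrite undup_uniq.
have sR : {subset R <= R'} by move=> j jr; rewrite mem_undup mem_cat jr.
have sr : {subset rl s <= R'} by move=> j jr; rewrite mem_undup mem_cat jr orbT.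
have vR' : forall j, j \in R' -> valid j.
  by move=> j; rewrite mem_undup mem_cat => /orP[/Rv|/rl_valid].
have h : forall t, \sum_(j <- R') Hs j (tau j - g j s) t = 0.
  move=> t; under eq_bigr do rewrite HsB; rewrite sumrB -(Gam_g t uR' sr).
  have et := e t; rewrite (sum_Hs_msk _ _ uR uR' sR) in et; rewrite et; apply/eqP; rewrite subr_eq0; apply/eqP.
  apply: eq_bigr => j _; rewrite /msk; case: ifP => // /negbT jn; by rewrite z.
move=> j; case: (boolP (j \in R')) => jR.
  by apply/eqP; rewrite eq_sym -subr_eq0; apply/eqP; apply: (F2 uR' vR' h).
rewrite z ?g_out //; apply/negP => jr; move/negP: jR; apply; [exact: sr|exact: sR].
Qed.

Lemma g_lc j c s s' : g j (c *: s + s') = c *: g j s + g j s'.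
Proof.
pose R := undup (rl s ++ rl s').
have uR : uniq R by rewrite undup_uniq.
have s1 : {subset rl s <= R} by move=> i ir; rewrite mem_undup mem_cat ir.
have s2 : {subset rl s' <= R} by move=> i ir; rewrite mem_undup mem_cat ir orbT.
apply: (g_char (R := R) (tau := fun j => c *: g j s + g j s')) => //.
- by move=> i; rewrite mem_undup mem_cat => /orP[/rl_valid|/rl_valid].
- move=> i iR; rewrite !g_out ?scaler0 ?addr0 //; apply/negP => ir; move/negP: iR; apply.
    exact: s2. exact: s1.
move=> t; rewrite Gam_lc (Gam_g t uR s1) (Gam_g t uR s2) scaler_sumr -big_split /=.
by apply: eq_bigr => i _; rewrite Hs_lc.
Qed.

Lemma g_lin j : lin (g j). Proof. by move=> c s s'; apply: g_lc. Qed.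

Lemma g_mul j s1 s2 : g j (s1 * s2) = g j s1 * s2 + s1 * g j s2.
Proof.
pose R := undup (rl s1 ++ rl s2).
have uR : uniq R by rewrite undup_uniq.
have h1 : {subset rl s1 <= R} by move=> i ir; rewrite mem_undup mem_cat ir.
have h2 : {subset rl s2 <= R} by move=> i ir; rewrite mem_undup mem_cat ir orbT.
apply: (g_char (R := R) (tau := fun j => g j s1 * s2 + s1 * g j s2)) => //.
- by move=> i; rewrite mem_undup mem_cat => /orP[/rl_valid|/rl_valid].
- move=> i iR; rewrite !g_out ?mul0r ?mulr0 ?addr0 //; apply/negP => ir; move/negP: iR; apply.
    exact: h2. exact: h1.
move=> t; rewrite Gam_mul (Gam_g _ uR h1) (Gam_g _ uR h2) (lin_sum (Rop_lin s1)) -big_split /=.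
by apply: eq_bigr => i _; rewrite HsD Hs_Rop Rop_Hs.
Qed.

Lemma g_der j : is_derivation (@GRing.mul S) (g j).
Proof. by split; [exact: g_lin|move=> x y; exact: g_mul]. Qed.

Lemma g_summable : summable g.
Proof. by move=> s; exists (rl s) => j; apply: g_out. Qed.

Definition hE j : T -> T := Top tens (bb j) (g j).
Lemma hE_lin j : lin (hE j).
Proof. rewrite /hE; exact: (Top_lin Htp (bb_lin j) (g_lin j)). Qed.
Lemma hE_tens j a x : hE j (tens a x) = tens (bb j a) (g j x).
Proof. rewrite /hE; exact: (Top_tens Htp _ _ (bb_lin j) (g_lin j)). Qed.

Lemma hE_supp t : exists r, fsupp (fun j => hE j t) r.
Proof.
move: t; apply: (tens_ind Htp).
- by exists [::]; split => // i _; rewrite (lin0 (hE_lin i)).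
- move=> c x y [r1 h1] [r2 h2]; have [h1' h2'] := fsupp_union h1 h2.
  exists (undup (r1 ++ r2)); apply: fsupp_ext (fsupp_lin c h1' h2').
  by move=> i; rewrite (hE_lin i).
- move=> a x; exists (rl x); split; first exact: rl_uniq.
  by move=> j jn; rewrite hE_tens g_out // tens0r.
Qed.

Definition E t := fsumv (fun j => hE j t).
Lemma E_lin : lin E.
Proof. by apply: lin_fsumv; [exact: hE_lin|exact: hE_supp]. Qed.
Lemma E_tens a x R : uniq R -> {subset rl x <= R} ->
  E (tens a x) = \sum_(j <- R) tens (bb j a) (g j x).
Proof.
move=> uR sub; rewrite /E (@fsumvE _ _ _ R).
  by apply: eq_bigr => j _; rewrite hE_tens.
split => // j jn; rewrite hE_tens g_out ?tens0r //.
by apply/negP => jr; move/negP: jn; apply; apply: sub.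
Qed.

Lemma E_der : is_derivation mulT E.
Proof.
split; first exact: E_lin.
apply: (bil_ext Htp (bilin_comp1 E_lin) (bilin_add (bilin_compl E_lin) (bilin_compr E_lin))).
move=> a s c t; have [uR s1 s2 s3] := undup3 (rl (s * t)) (rl s) (rl t).
rewrite Hpure !(E_tens _ uR) // (lin_sum (mulT_l _)) (lin_sum (mulT_r _)) -big_split /=.
apply: eq_bigr => j _; rewrite !Hpure g_mul (linD (tens_r _)).
have [_ bm] := bb_cent j; have [e1 e2] := bm a c.
by rewrite {1}e1 e2.
Qed.

Lemma E_comm s t : E (Rop s t) - Rop s (E t) = Gam s t.
Proof.
move: t; apply: (lin_ext Htp).
- exact: lin_sub (lin_comp (Rop_lin s) E_lin) (lin_comp E_lin (Rop_lin s)).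
- exact: Gam_lin.
move=> a x; have [uR s1 s2 s3] := undup3 (rl (s * x)) (rl x) (rl s).
rewrite Rop_tens !(E_tens _ uR) // (Gam_g _ uR s3) (lin_sum (Rop_lin s)) -sumrB.
apply: eq_bigr => j _; rewrite Rop_tens Hs_tens g_mul (linD (tens_r _)).
by rewrite addrK.
Qed.

Definition Dp t := D t - E t.
Lemma Dp_lin : lin Dp. Proof. exact: lin_sub D_lin E_lin. Qed.
Lemma Dp_der : is_derivation mulT Dp.
Proof.
split; first exact: Dp_lin.
move=> x y; have [_ dm] := HD; have [_ em] := E_der.
rewrite /Dp dm em (linB (mulT_l y)) (linB (mulT_r x)).
by rewrite opprD addrACA.
Qed.
Lemma Dp_comm s t : Dp (Rop s t) = Rop s (Dp t).
Proof.
have e := E_comm s t; rewrite /Gam in e.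
rewrite /Dp.
have -> : E (Rop s t) = D (Rop s t) - Rop s (D t) + Rop s (E t) by rewrite -e subrK.
rewrite (linB (Rop_lin s)) opprD addrA opprB (addrC (D (Rop s t))) subrK //.
Qed.

Lemma fP_der e : is_derivation mulA (fP Dp e).
Proof.
split; first exact: fP_lin Dp_lin e.
move=> x y; rewrite /fP; have -> : tens (mulA x y) 1 = mulT (tens x 1) (tens y 1).
  by rewrite Hpure mulr1.
have [_ dm] := Dp_der; rewrite dm (linD (pT_lin e)) pT_mulr pT_mull //.
Qed.

Lemma D_split t : D t = Dp t + E t.
Proof. by rewrite /Dp subrK. Qed.

Lemma hE_op j : is_tensor_op tens (b j) (g j) (hE j).
Proof.
split; first exact: hE_lin.
move=> u v; rewrite hE_tens; case: (pselect (valid j)) => vj; first by rewrite bb_valid.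
by rewrite !g_inval // !tens0r.
Qed.
Lemma hE_op_bb j : is_tensor_op tens (bb j) (g j) (hE j).
Proof. by split; [exact: hE_lin|move=> u v; exact: hE_tens]. Qed.

Lemma E_fam : fam_sum hE E.
Proof.
move=> v; have [r [u z]] := hE_supp v; exists r; split => //.
by rewrite /E (@fsumvE _ _ _ r).
Qed.

Lemma hP_op e : is_tensor_op tens (fP Dp e) (mulL e) (hP Dp e).
Proof. by split; [exact: (hP_lin Dp_lin)|move=> u v; exact: (hP_tens Dp_lin)]. Qed.

Lemma Dp_fam : fam_sum (hP Dp) Dp.
Proof.
move=> v; have [r [u z]] := hP_supp Dp_lin v; exists r; split => //.
by rewrite (Phi_decomp Dp_lin Dp_comm) (@fsumvE _ _ _ r).
Qed.

Lemma fP_summ : summable (fP Dp).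
Proof. by move=> a; have [u z] := fP_supp Dp a; exists (tsupp (Dp (tens a 1))). Qed.

Lemma fP_out e : ~ BS e -> forall a, fP Dp e a = 0.
Proof. by move=> ne a; rewrite /fP pT_out. Qed.

Lemma D_in_star : exists x y, [/\ left_tens_set mulA tens x, right_tens_set tens b y &
  forall t, D t = x t + y t].
Proof.
exists Dp, E; split; last exact: D_split.
- exists (S : eqType), (fP Dp), (fun e => e), (hP Dp); split.
  + exact: fP_der.
  + exact: fP_summ.
  + move=> e; exact: hP_op.
  + exact: Dp_fam.
- exists g, hE; split; [exact: g_der|exact: g_summable|exact: hE_op|exact: E_fam].
Qed.

Lemma D_in_fin :
  (forall F : S -> A -> A, (forall e, is_derivation mulA (F e)) -> summable F ->
     (forall e, ~ BS e -> forall a, F e a = 0) -> exists r : seq S, forall e, e \notin r -> forall a, F e a = 0) ->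
  (forall G : J -> S -> S, (forall j, is_derivation (@GRing.mul S) (G j)) -> summable G ->
     (forall j, ~ valid j -> forall s, G j s = 0) -> exists r : seq J, forall j, j \notin r -> forall s, G j s = 0) ->
  exists x y, [/\ fin_left_tens_set mulA tens x, fin_right_tens_set mulA tens y &
    forall t, D t = x t + y t].
Proof.
move=> HL HR.
have [r1 z1] := HL (fP Dp) fP_der fP_summ fP_out.
have gi : forall j, ~ valid j -> forall s, g j s = 0 by move=> j nv s; exact: g_inval.
have [r2 z2] := HR g g_der g_summable gi.
exists Dp, E; split; last exact: D_split.
- have z1' : forall e, e \notin undup r1 -> forall a, fP Dp e a = 0.
    by move=> e; rewrite mem_undup; exact: z1.
  have e1 := Phi_decomp_fin Dp_lin Dp_comm (undup_uniq r1) z1'.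
  exists (size (undup r1)), (fun i => fP Dp (tnth (in_tuple (undup r1)) i)),
    (fun i => tnth (in_tuple (undup r1)) i), (fun i => hP Dp (tnth (in_tuple (undup r1)) i)).
  split.
  + move=> i; exact: fP_der.
  + move=> i; exact: hP_op.
  + by move=> t; rewrite e1 big_tnth.
- have e2 : forall t, E t = \sum_(j <- undup r2) hE j t.
    move=> t; rewrite /E; apply: fsumvE; split; first exact: undup_uniq.
    move=> j jn; move: t; apply: (lin_ext Htp (hE_lin j) (@lin_zero k T T)) => a x.
    by rewrite hE_tens z2 ?tens0r //; move: jn; rewrite mem_undup.
  exists (size (undup r2)), (fun i => bb (tnth (in_tuple (undup r2)) i)),
    (fun i => g (tnth (in_tuple (undup r2)) i)), (fun i => hE (tnth (in_tuple (undup r2)) i)).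
  split.
  + move=> i; exact: bb_cent.
  + move=> i; exact: g_der.
  + move=> i; exact: hE_op_bb.
  + by move=> t; rewrite e2 big_tnth.
Qed.

End Der.
End Core.

Lemma CT_from_fin : perfect mulA ->
  (forall G, in_centroid mulT G -> exists r : seq S, forall e, e \notin r -> forall a, fP G e a = 0) ->
  CTfinP.
Proof.
move=> pA H G HG; have [r z] := H G HG.
have Gl : lin G by case: HG.
have Gc : forall s t, G (Rop s t) = Rop s (G t).
  by move=> s t; apply: (centroid_comm HmT (T_perfect pA) HG (Rop_centroid s)).
have z' : forall e, e \notin undup r -> forall a, fP G e a = 0.
  by move=> e; rewrite mem_undup; exact: z.
have e1 := Phi_decomp_fin Gl Gc (undup_uniq r) z'.
exists (map (fun e => (fP G e, e)) (undup r)); split.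
  move=> p /List.in_map_iff [e [<- _]] /=; split; first exact: fP_lin.
  move=> x y; rewrite /fP; have -> : tens (mulA x y) 1 = mulT (tens x 1) (tens y 1).
    by rewrite Hpure mulr1.
  have [_ gm] := HG; have [g1 g2] := gm (tens x 1) (tens y 1).
  by split; [rewrite g1 pT_mulr|rewrite g2 pT_mull].
by move=> t; rewrite e1 big_map.
Qed.

Lemma fP_cent G e : in_centroid mulT G -> in_centroid mulA (fP G e).
Proof.
move=> HG; split.
  apply: fP_lin; exact: centroid_lin HG.
move=> x y; rewrite /fP; have -> : tens (mulA x y) 1 = mulT (tens x 1) (tens y 1).
  by rewrite Hpure mulr1.
have [_ gm] := HG; have [g1 g2] := gm (tens x 1) (tens y 1).
by split; [rewrite g1 pT_mulr|rewrite g2 pT_mull].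
Qed.

Lemma fP_summable G : summable (fP G).
Proof. by move=> a; have [u z] := fP_supp G a; exists (tsupp (G (tens a 1))). Qed.

End Basis.

Section Finite.
Variable I : eqType.

Lemma CF_alg (F : I -> A -> A) : alg_fg mulA -> (forall i, in_centroid mulA (F i)) ->
  summable F -> exists r : seq I, forall i, i \notin r -> forall a, F i a = 0.
Proof.
move=> [n [v hv]] Fc sF; have [r hr] := gen_supp v sF; exists r => i ir.
have [Fl Fm] := Fc i; apply: hv.
- exact: lin0 Fl.
- by move=> c x y hx hy; rewrite Fl hx hy scaler0 addr0.
- by move=> x y hx _; have [-> _] := Fm x y; rewrite hx (lin0 (mulA_l y)).
- exact: hr.
Qed.

Lemma CF_unital (F : I -> A -> A) : unital_alg mulA -> (forall i, in_centroid mulA (F i)) ->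
  summable F -> exists r : seq I, forall i, i \notin r -> forall a, F i a = 0.
Proof.
move=> [e0 he] Fc sF; have [r hr] := sF e0; exists r => i ir a.
have [Fl Fm] := Fc i; have [<- _] := he a; have [-> _] := Fm e0 a.
by rewrite hr // (lin0 (mulA_l a)).
Qed.

Lemma CF_mod (F : I -> A -> A) : perfect mulA -> module_fg_over (in_centroid mulA) ->
  (forall i, in_centroid mulA (F i)) ->
  summable F -> exists r : seq I, forall i, i \notin r -> forall a, F i a = 0.
Proof.
move=> pA [n [v hv]] Fc sF; have [r hr] := gen_supp v sF; exists r => i ir a.
have [g [gc ->]] := hv a; have [Fl _] := Fc i.
rewrite (lin_sum Fl) big1 // => q _.
by rewrite (centroid_comm HmA pA (Fc i) (gc q)) hr // (lin0 (centroid_lin (gc q))).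
Qed.

Lemma F_finA (F : I -> A -> A) : fin_dim A -> (forall i, lin (F i)) ->
  summable F -> exists r : seq I, forall i, i \notin r -> forall a, F i a = 0.
Proof.
move=> [n [v hv]] Fl sF; have [r hr] := gen_supp v sF; exists r => i ir.
apply: (lin_span_zero hv (Fl i)) => q; exact: hr.
Qed.

Lemma DF_alg (F : I -> A -> A) : alg_fg mulA -> (forall i, is_derivation mulA (F i)) ->
  summable F -> exists r : seq I, forall i, i \notin r -> forall a, F i a = 0.
Proof.
move=> [n [v hv]] Fd sF; have [r hr] := gen_supp v sF; exists r => i ir.
have [Fl Fm] := Fd i; apply: hv.
- exact: lin0 Fl.
- by move=> c x y hx hy; rewrite Fl hx hy scaler0 addr0.
- by move=> x y hx hy; rewrite Fm hx hy (lin0 (mulA_l y)) (lin0 (mulA_r x)) addr0.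
- exact: hr.
Qed.

Lemma DF_mod (F : I -> A -> A) : module_fg_over (in_centroid mulA) -> DC_commute mulA ->
  (forall i, is_derivation mulA (F i)) ->
  summable F -> exists r : seq I, forall i, i \notin r -> forall a, F i a = 0.
Proof.
move=> [n [v hv]] dc Fd sF; have [r hr] := gen_supp v sF; exists r => i ir a.
have [g [gc ->]] := hv a; have [Fl _] := Fd i.
rewrite (lin_sum Fl) big1 // => q _.
by rewrite (dc _ _ (Fd i) (gc q)) hr // (lin0 (centroid_lin (gc q))).
Qed.

Lemma DF_dmod (F : I -> A -> A) : module_fg_over (in_dcentroid mulA) ->
  (forall i, is_derivation mulA (F i)) ->
  summable F -> exists r : seq I, forall i, i \notin r -> forall a, F i a = 0.
Proof.
move=> [n [v hv]] Fd sF; have [r hr] := gen_supp v sF; exists r => i ir a.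
have [g [gc ->]] := hv a; have [Fl _] := Fd i.
rewrite (lin_sum Fl) big1 // => q _.
have [[gl _] gd] := gc q.
by rewrite -(gd _ (Fd i)) hr // (lin0 gl).
Qed.

Lemma GF_fg (G : I -> S -> S) : comalg_fg S -> (forall i, is_derivation (@GRing.mul S) (G i)) ->
  summable G -> exists r : seq I, forall i, i \notin r -> forall s, G i s = 0.
Proof.
move=> [n [v hv]] Gd sG; have [r hr] := gen_supp v sG; exists r => i ir.
have [Gl Gm] := Gd i; apply: hv.
- exact: der1.
- by move=> c x y hx hy; rewrite Gl hx hy scaler0 addr0.
- by move=> x y hx hy; rewrite Gm hx hy mul0r mulr0 addr0.
- exact: hr.
Qed.

Lemma GF_finS (G : I -> S -> S) : fin_dim S -> (forall i, lin (G i)) ->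
  summable G -> exists r : seq I, forall i, i \notin r -> forall s, G i s = 0.
Proof.
move=> [n [v hv]] Gl sG; have [r hr] := gen_supp v sG; exists r => i ir.
apply: (lin_span_zero hv (Gl i)) => q; exact: hr.
Qed.

Lemma F_cover (X : lmodType k) (F : I -> X -> X) (P : I -> Prop) :
  (exists r : seq I, forall i, P i -> i \in r) -> (forall i, ~ P i -> forall a, F i a = 0) ->
  exists r : seq I, forall i, i \notin r -> forall a, F i a = 0.
Proof.
move=> [r hr] h; exists r => i ir; apply: h => Pi; move: ir; by rewrite hr.
Qed.

End Finite.

Lemma dmod_mod : module_fg_over (in_dcentroid mulA) -> module_fg_over (in_centroid mulA).
Proof.
move=> [n [v hv]]; exists n, v => x; have [g [gc e]] := hv x; exists g; split => //.
by move=> i; case: (gc i).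
Qed.

Lemma BS_cover (BS : set S) : fin_dim S -> indep BS -> exists r : seq S, forall e, BS e -> e \in r.
Proof.
move=> [n [v hv]] iB; apply: (bounded_cover (N := n)) => l ul lB.
apply: (steinitz (v := v) ul).
  by move=> c e x xl; exact: (iB l c ul lB e x xl).
by move=> x _; exact: hv.
Qed.

Lemma fun_sum_app (X : Type) (Y : lmodType k) (J : Type) (r : seq J) (c : J -> k) (f : J -> X -> Y) x :
  (\sum_(j <- r) c j *: f j) x = \sum_(j <- r) c j *: f j x.
Proof. by rewrite fct_sumE. Qed.

Lemma Bc_cover_CA (Bc : set (A -> A)) : op_space_fin_dim (in_centroid mulA) ->
  (forall x, Bc x -> in_centroid mulA x) -> indep Bc ->
  exists r : seq (A -> A), forall x, Bc x -> x \in r.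
Proof.
move=> [n [v [vc hv]]] Bcc iB; apply: (bounded_cover (N := n)) => l ul lB.
apply: (steinitz (v := v) ul).
  by move=> c e x xl; exact: (iB l c ul lB e x xl).
move=> x xl; have [c hc] := hv x (Bcc x (lB x xl)); exists c; apply: funext => y.
by rewrite hc fun_sum_app.
Qed.

Lemma scale_app (X : Type) (Y : lmodType k) c (f : X -> Y) x : (c *: f) x = c *: f x.
Proof. by []. Qed.

Lemma lin_bigsum_in (X Y : lmodType k) (J : eqType) (r : seq J) (F : J -> X -> Y) :
  (forall i, i \in r -> lin (F i)) -> lin (fun x => \sum_(i <- r) F i x).
Proof.
move=> hF a x y; elim: r hF => [|i r IH] hF; first by rewrite !big_nil scaler0 addr0.
rewrite !big_cons IH; last by move=> j jr; apply: hF; rewrite inE jr orbT.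
by rewrite (hF i (mem_head _ _)) scalerDr addrACA.
Qed.

Lemma Bc_cover_A (Bc : set (A -> A)) : fin_dim A ->
  (forall x, Bc x -> in_centroid mulA x) -> indep Bc ->
  exists r : seq (A -> A), forall x, Bc x -> x \in r.
Proof.
move=> [n [v hv]] Bcc iB; apply: (bounded_cover (N := #|{: 'I_n * 'I_n}|)) => l ul lB.
pose Phi (g : A -> A) : 'I_n -> A := fun q => g (v q).
have Bl : forall x, x \in l -> lin x by move=> x xl; case: (Bcc x (lB x xl)).
have inj : {in l &, injective Phi}.
  move=> g1 g2 g1l g2l e; apply: funext => x; apply/eqP; rewrite -subr_eq0; apply/eqP.
  move: x; apply: (lin_span_zero hv (lin_sub (Bl _ g1l) (Bl _ g2l))) => q.
  by have := congr1 (fun f => f q) e; rewrite /Phi /= => ->; rewrite subrr.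
rewrite -(size_map Phi); apply: (steinitzF
  (w := fun p : 'I_n * 'I_n => (fun q : 'I_n => if q == p.2 then v p.1 else 0) : 'I_n -> A)).
- by rewrite map_inj_in_uniq.
- move=> c e y /mapP [g gl ->].
  have e0 := e; rewrite big_map in e0.
  have hq : forall q, \sum_(g <- l) c (Phi g) *: g (v q) = 0.
    by move=> q; move: (congr1 (fun f => f q) e0) => /=; rewrite fun_sum_app.
  have hl : lin (fun x => \sum_(g <- l) c (Phi g) *: g x).
    by apply: lin_bigsum_in => h hl; apply: lin_scale; apply: Bl.
  have e' : \sum_(g <- l) c (Phi g) *: g = 0.
    apply: funext => x; rewrite fun_sum_app; exact: (lin_span_zero hv hl hq x).
  exact: (iB l (fun g => c (Phi g)) ul lB e').
- move=> y /mapP [g gl ->].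
  have [cq hcq] := @choice _ _ (fun q (c : 'I_n -> k) => g (v q) = \sum_i c i *: v i)
    (fun q => hv (g (v q))).
  exists (fun p => cq p.2 p.1).
  have -> : \sum_(p : 'I_n * 'I_n) cq p.2 p.1 *: (fun q : 'I_n => if q == p.2 then v p.1 else 0)
     = \sum_i \sum_j cq j i *: (fun q : 'I_n => if q == j then v i else 0).
    by rewrite [RHS]pair_bigA.
  apply: funext => q'; rewrite /Phi hcq fct_sumE; apply: eq_bigr => i _.
  rewrite fct_sumE; under eq_bigr do rewrite scale_app /=.
  rewrite (bigD1 q') //= eqxx big1 ?addr0 // => j /negbTE ne.
  by rewrite eq_sym ne scaler0.
Qed.

Section Main.
Hypothesis pA : perfect mulA.

Lemma basisS : exists BS : set S, indep BS /\ forall x, spans BS x.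
Proof.
have [BS [_ iB sB]] := hamel (V := S) setT.
by exists BS; split => // x; apply: sB.
Qed.

Lemma star_of_CT : CTfinP -> star_decomp mulA tens mulT.
Proof.
move=> HCT J b [bc [bi bs]]; have [BS [iB sB]] := basisS.
have bval : forall j, (fun _ => True) j -> in_centroid mulA (b j) by move=> j _; exact: bc.
have bind : forall (r : seq J) (c : J -> k), uniq r -> (forall j, j \in r -> (fun _ => True) j) ->
    (forall x, \sum_(j <- r) c j *: b j x = 0) -> forall j, j \in r -> c j = 0.
  by move=> r c u _; exact: bi.
have bspan : forall g, in_centroid mulA g -> exists r (c : J -> k),
    [/\ uniq r, (forall j, j \in r -> (fun _ => True) j) & forall x, g x = \sum_(j <- r) c j *: b j x].
  by move=> g hg; have [r [c [u e]]] := bs g hg; exists r, c; split.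
apply: decomp_gen => // [z|D HD].
  by apply: right_gright; split.
exact: (D_in_star iB sB bval bind bspan HCT HD).
Qed.

Lemma Top_scale (f : A -> A) (s : S) c t : lin f ->
  Top tens f (mulL (c *: s)) t = c *: Top tens f (mulL s) t.
Proof.
move=> fl; move: t; apply: (lin_ext Htp).
- exact: (Top_lin Htp fl (mulL_lin _)).
- exact: lin_scale (Top_lin Htp fl (mulL_lin _)).
move=> u v; rewrite !(Top_tens Htp _ _ fl (mulL_lin _)) /mulL -scalerAl.
exact: (linZ (tens_r _)).
Qed.

Lemma CT_psi : psi_iso mulA tens mulT -> CTfinP.
Proof.
move=> [CA [iota [U [tensU [psi [[iL [iI [iC iS]]] [Utp [pL [pT' [pI [pC pS]]]]]]]]]]].
move=> G HG; have [u hu] := pS G HG.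
suff [l [lc le]] : exists l : seq ((A -> A) * S),
    (forall p, List.In p l -> in_centroid mulA p.1) /\
    forall t, psi u t = \sum_(p <- l) Top tens p.1 (mulL p.2) t.
  by exists l; split => // t; rewrite -hu le.
move: u {hu}; apply: (tens_ind Utp).
- exists [::]; split => // t; rewrite big_nil.
  have := pL 1 0 0 t; rewrite !scale1r !addr0 => e.
  by apply: (@addrI _ (psi 0 t)); rewrite -e addr0.
- move=> c x y [l1 [c1 e1]] [l2 [c2 e2]].
  exists (map (fun p => (p.1, c *: p.2)) l1 ++ l2); split.
    move=> p pin; case: (List.in_app_or _ _ _ pin) => [|pl]; last exact: c2.
    by move=> /List.in_map_iff [q [e ql]]; rewrite -e; exact: (c1 q ql).
  move=> t; rewrite pL big_cat e1 e2; congr (_ + _).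
  elim: l1 c1 {e1} => [|p l IH] h; first by rewrite !big_nil scaler0.
  rewrite /= !big_cons -IH; last by move=> q ql; apply: h; right.
  by rewrite Top_scale ?scalerDr //; apply: centroid_lin (h p (List.in_eq _ _)).
- move=> a s; exists [:: (iota a, s)]; split.
    by move=> p [<-|[]]; exact: iC.
  move=> t; rewrite big_seq1 /=; apply: (Top_uniq Htp); [exact: centroid_lin (iC a)|exact: mulL_lin|exact: pT'].
Qed.

Lemma CT_part2 : fin_dim S \/ alg_fg mulA \/ pfgc mulA \/ unital_alg mulA -> CTfinP.
Proof.
move=> H; have [BS [iB sB]] := basisS.
apply: (CT_from_fin iB sB pA) => G HG.
have Fc : forall e, in_centroid mulA (fP BS G e) by move=> e; apply: fP_cent.
have Fs : summable (fP BS G) by apply: fP_summable.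
case: H => [fS|[fg|[[_ [_ mfg]]|un]]].
- apply: (F_cover (P := BS)); first exact: BS_cover.
  by move=> e ne a; rewrite /fP; apply: pT_out.
- exact: CF_alg fg Fc Fs.
- exact: CF_mod pA mfg Fc Fs.
- exact: CF_unital un Fc Fs.
Qed.

Lemma part3 : (fin_dim A \/ fin_dim S) \/
      ((op_space_fin_dim (in_centroid mulA) \/ comalg_fg S) /\
       (alg_fg mulA \/
        (module_fg_over (in_centroid mulA) /\ DC_commute mulA) \/
        module_fg_over (in_dcentroid mulA))) ->
  dsum_decomp (is_derivation mulT) (fin_left_tens_set mulA tens) (fin_right_tens_set mulA tens).
Proof.
move=> H; have [BS [iB sB]] := basisS.
have HCT : CTfinP.
  apply: (CT_from_fin iB sB pA) => G HG.
  have Fc : forall e, in_centroid mulA (fP BS G e) by move=> e; apply: fP_cent.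
  have Fs : summable (fP BS G) by apply: fP_summable.
  case: H => [[fA|fS]|[_ [fg|[[mfg _]|dfg]]]].
  - by apply: (F_finA fA _ Fs) => e; exact: centroid_lin (Fc e).
  - apply: (F_cover (P := BS)); first exact: BS_cover.
    by move=> e ne a; rewrite /fP; apply: pT_out.
  - exact: CF_alg fg Fc Fs.
  - exact: CF_mod pA mfg Fc Fs.
  - exact: CF_mod pA (dmod_mod dfg) Fc Fs.
have [Bc [BcC iBc sBc]] := hamel (V := A -> A) (in_centroid mulA).
have bval : forall j : A -> A, Bc j -> in_centroid mulA ((fun j => j) j) by move=> j; exact: BcC.
have bind : forall (r : seq (A -> A)) (c : (A -> A) -> k), uniq r -> (forall j, j \in r -> Bc j) ->
    (forall x, \sum_(j <- r) c j *: (fun j => j) j x = 0) -> forall j, j \in r -> c j = 0.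
  move=> r c u rB h; apply: (iBc r c u rB); apply: funext => x; rewrite fun_sum_app; exact: h.
have bspan : forall g, in_centroid mulA g -> exists r (c : (A -> A) -> k),
    [/\ uniq r, (forall j, j \in r -> Bc j) & forall x, g x = \sum_(j <- r) c j *: (fun j => j) j x].
  move=> g hg; have [r [c [u rB e]]] := sBc g hg; exists r, c; split => // x.
  by rewrite {1}e fun_sum_app.
apply: decomp_gen => [z|z|D HD]; [exact: fin_left_left|exact: fin_right_gright|].
apply: (D_in_fin iB sB bval bind bspan HCT HD).
- move=> F Fd sF Fo; case: H => [[fA|fS]|[_ [fg|[[mfg dc]|dfg]]]].
  + by apply: (F_finA fA _ sF) => e; exact: der_lin (Fd e).
  + exact: F_cover (BS_cover fS iB) Fo.
  + exact: DF_alg fg Fd sF.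
  + exact: DF_mod mfg dc Fd sF.
  + exact: DF_dmod dfg Fd sF.
- move=> G Gd sG Go; case: H => [[fA|fS]|[[oC|fgS] _]].
  + exact: F_cover (Bc_cover_A fA BcC iBc) Go.
  + by apply: (GF_finS fS _ sG) => j; exact: der_lin (Gd j).
  + exact: F_cover (Bc_cover_CA oC BcC iBc) Go.
  + exact: GF_fg fgS Gd sG.
Qed.

Lemma main_result :
  [/\ psi_iso mulA tens mulT -> star_decomp mulA tens mulT,
      fin_dim S \/ alg_fg mulA \/ pfgc mulA \/ unital_alg mulA ->
        star_decomp mulA tens mulT &
      (fin_dim A \/ fin_dim S) \/
      ((op_space_fin_dim (in_centroid mulA) \/ comalg_fg S) /\
       (alg_fg mulA \/
        (module_fg_over (in_centroid mulA) /\ DC_commute mulA) \/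
        module_fg_over (in_dcentroid mulA))) ->
        dsum_decomp (is_derivation mulT) (fin_left_tens_set mulA tens)
                    (fin_right_tens_set mulA tens)].
Proof.
split.
- by move/CT_psi; exact: star_of_CT.
- by move/CT_part2; exact: star_of_CT.
- exact: part3.
Qed.

End Main.
End Setting.

Theorem theorem2p5 (k : fieldType) (A : lmodType k) (mulA : A -> A -> A)
  (S : comAlgType k) (T : lmodType k) (tens : A -> S -> T) (mulT : T -> T -> T) :
  bilin mulA -> perfect mulA ->
  is_tensor_product tens -> bilin mulT ->
  (forall (a b : A) (s t : S), mulT (tens a s) (tens b t) = tens (mulA a b) (s * t)) ->
  [/\ psi_iso mulA tens mulT -> star_decomp mulA tens mulT,
      fin_dim S \/ alg_fg mulA \/ pfgc mulA \/ unital_alg mulA ->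
        star_decomp mulA tens mulT &
      (fin_dim A \/ fin_dim S) \/
      ((op_space_fin_dim (in_centroid mulA) \/ comalg_fg S) /\
       (alg_fg mulA \/
        (module_fg_over (in_centroid mulA) /\ DC_commute mulA) \/
        module_fg_over (in_dcentroid mulA))) ->
        dsum_decomp (is_derivation mulT) (fin_left_tens_set mulA tens)
                    (fin_right_tens_set mulA tens)].
Proof.
move=> HmA pA Htp HmT Hpure.
exact: (main_result HmA Htp HmT Hpure pA).
Qed.
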